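(* Let $\mathbb{K}$ be an algebraically closed field of characteristic zero, let $Y$ be an affine factorial variety over $\mathbb{K}$, and let $f\in\mathbb{K}[Y]$ be non-constant with $f=p_1^{a_1}\cdots p_s^{a_s}$, where $p_1,\dots,p_s$ are pairwise non-associated prime elements of $\mathbb{K}[Y]$ and $a_i\in\mathbb{Z}_{>0}$. Let $X=\{uv=f\}\subseteq\mathbb{A}^2_{u,v}\times Y$. Then the divisor class group satisfies $\operatorname{Cl}(X)\cong\mathbb{Z}^s/\langle\omega\rangle$, where $\omega=(a_1,\dots,a_s)$. *)

(* Defs.v *)
From HB Require Import structures.
From mathcomp Require Import all_boot all_order all_algebra.
From Stdlib Require List.
Set Implicit Arguments. Unset Strict Implicit. Unset Printing Implicit Defensive.
Import Order.TTheory GRing.Theory Num.Theory.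
Local Open Scope ring_scope.

Definition rdvd {R : comNzRingType} (p x : R) : Prop := exists c, x = c * p.

Definition prime_elt {R : comUnitRingType} (p : R) : Prop :=
  p != 0 /\ p \isn't a GRing.unit /\
  forall x y, rdvd p (x * y) -> rdvd p x \/ rdvd p y.

Definition associated {R : comNzRingType} (p q : R) : Prop := rdvd p q /\ rdvd q p.

Definition factorial_ring (R : idomainType) : Prop :=
  forall b : R, b != 0 -> b \isn't a GRing.unit ->
    exists l : seq R, (forall q, q \in l -> prime_elt q) /\ b = \prod_(q <- l) q.

Definition in_gen_subalg {K : fieldType} {B : comNzRingType} (phi : K -> B)
  {n : nat} (gens : 'I_n -> B) (b : B) : Prop :=
  forall S : B -> Prop,
    (forall c, S (phi c)) -> (forall i, S (gens i)) ->
    (forall x y, S x -> S y -> S (x + y)) ->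
    (forall x y, S x -> S y -> S (x * y)) -> S b.

Definition fin_gen_alg {K : fieldType} {B : comNzRingType} (phi : K -> B) : Prop :=
  exists n (gens : 'I_n -> B), forall b, in_gen_subalg phi gens b.

(* evaluation of P in B[u][v] (inner variable u, outer variable v) *)
Definition ev2 {B A : comNzRingType} (iota : B -> A) (u v : A)
  (P : {poly {poly B}}) : A :=
  \sum_(i < size P) (\sum_(j < size P`_i) iota (P`_i)`_j * u ^+ j) * v ^+ i.

Definition is_ideal {A : comNzRingType} (I : A -> Prop) : Prop :=
  I 0 /\ (forall x y, I x -> I y -> I (x + y)) /\ (forall r x, I x -> I (r * x)).

Definition prime_ideal {A : comNzRingType} (P : A -> Prop) : Prop :=
  is_ideal P /\ ~ P 1 /\ forall x y, P (x * y) -> P x \/ P y.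

Definition height_one {A : comNzRingType} (P : A -> Prop) : Prop :=
  prime_ideal P /\ (exists x, x != 0 /\ P x) /\
  forall Q : A -> Prop, prime_ideal Q -> (forall x, Q x -> P x) ->
    (forall x, Q x -> x = 0) \/ (forall x, Q x <-> P x).

Definition HOP (A : comNzRingType) := {P : A -> Prop | height_one P}.

Fixpoint ideal_pow {A : comNzRingType} (P : A -> Prop) (n : nat) (a : A) : Prop :=
  match n with
  | 0%N => True
  | n'.+1 => exists l : seq (A * A),
      (forall xy, xy \in l -> ideal_pow P n' xy.1 /\ P xy.2) /\
      a = \sum_(xy <- l) xy.1 * xy.2
  end.

(* symbolic power P^(n) = P^n A_P ∩ A *)
Definition sym_pow {A : comNzRingType} (P : A -> Prop) (n : nat) (a : A) : Prop :=
  exists s, ~ P s /\ ideal_pow P n (s * a).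

Definition ord_at {A : comNzRingType} (P : A -> Prop) (a : A) (n : nat) : Prop :=
  sym_pow P n a /\ ~ sym_pow P n.+1 a.

Definition weil_div {A : comNzRingType} (D : HOP A -> int) : Prop :=
  exists l : list (A -> Prop), forall P, D P <> 0 -> List.In (proj1_sig P) l.

Definition is_div_of {A : comNzRingType} (a : A) (D : HOP A -> int) : Prop :=
  forall P : HOP A, exists n : nat, ord_at (proj1_sig P) a n /\ D P = n%:Z.

(* principal divisors: div(a/b) = div a - div b for nonzero a, b *)
Definition principal_div {A : comNzRingType} (D : HOP A -> int) : Prop :=
  exists (a b : A) (Da Db : HOP A -> int),
    a != 0 /\ b != 0 /\ is_div_of a Da /\ is_div_of b Db /\
    forall P, D P = Da P - Db P.

Definition in_span {s : nat} (w : 'I_s -> int) (z : 'I_s -> int) : Prop :=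
  exists k : int, forall i, z i = k * w i.

Definition Cl_iso_Zs_mod (A : comNzRingType) (s : nat) (w : 'I_s -> int) : Prop :=
  exists Phi : (HOP A -> int) -> ('I_s -> int),
    (forall D1 D2, weil_div D1 -> weil_div D2 ->
       forall i, Phi (fun P => D1 P + D2 P) i = Phi D1 i + Phi D2 i) /\
    (forall z, exists D, weil_div D /\ in_span w (fun i => Phi D i - z i)) /\
    (forall D, weil_div D -> (in_span w (Phi D) <-> principal_div D)).

(* Main.v *)
Require Import Defs.
From HB Require Import structures.
From mathcomp Require Import all_boot all_order all_algebra.
From Stdlib Require Import Classical ClassicalEpsilon FunctionalExtensionality PropExtensionality.
From mathcomp Require Import ring zify.
Set Implicit Arguments. Unset Strict Implicit. Unset Printing Implicit Defensive.
Import GRing.Theory.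
Local Open Scope ring_scope.

Section Dvd.
Variable R : idomainType.
Implicit Types x y z p q c e : R.

Lemma rdvd_refl x : rdvd x x. Proof. by exists 1; rewrite mul1r. Qed.
Lemma rdvd0 x : rdvd x 0. Proof. by exists 0; rewrite mul0r. Qed.
Lemma rdvd1 x : rdvd 1 x. Proof. by exists x; rewrite mulr1. Qed.
Lemma rdvd_trans x y z : rdvd x y -> rdvd y z -> rdvd x z.
Proof. by move=> [c ->] [d ->]; exists (d * c); rewrite mulrA. Qed.
Lemma rdvd_mulr x y z : rdvd x y -> rdvd x (y * z).
Proof. by move=> [c ->]; exists (c * z); rewrite mulrAC. Qed.
Lemma rdvd_mull x y z : rdvd x y -> rdvd x (z * y).
Proof. by rewrite mulrC; apply: rdvd_mulr. Qed.
Lemma rdvd_mulself x y : rdvd x (y * x). Proof. by exists y. Qed.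
Lemma rdvd_mulself2 x y : rdvd x (x * y). Proof. by exists y; rewrite mulrC. Qed.
Lemma rdvd_add x y z : rdvd x y -> rdvd x z -> rdvd x (y + z).
Proof. by move=> [c ->] [d ->]; exists (c + d); rewrite mulrDl. Qed.
Lemma rdvd_opp x y : rdvd x y -> rdvd x (- y).
Proof. by move=> [c ->]; exists (- c); rewrite mulNr. Qed.
Lemma rdvd_sub x y z : rdvd x y -> rdvd x z -> rdvd x (y - z).
Proof. by move=> h1 h2; apply: rdvd_add h1 (rdvd_opp h2). Qed.
Lemma rdvd_mul2 x y z w : rdvd x y -> rdvd z w -> rdvd (x * z) (y * w).
Proof. by move=> [c ->] [d ->]; exists (c * d); rewrite mulrACA. Qed.
Lemma rdvd_sum (I : Type) (r : seq I) (F : I -> R) x :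
  (forall i, rdvd x (F i)) -> rdvd x (\sum_(i <- r) F i).
Proof.
elim: r => [|i r IH] H; first by rewrite big_nil; apply: rdvd0.
by rewrite big_cons; apply: rdvd_add; [apply: H|apply: IH].
Qed.
Lemma rdvd_sumP (I : Type) (r : seq I) (P : pred I) (F : I -> R) x :
  (forall i, P i -> rdvd x (F i)) -> rdvd x (\sum_(i <- r | P i) F i).
Proof.
elim: r => [|i r IH] H; first by rewrite big_nil; apply: rdvd0.
rewrite big_cons; case: ifP => hP; last by apply: IH.
by apply: rdvd_add; [apply: H|apply: IH].
Qed.
Lemma rdvd_cancel x y z : z != 0 -> rdvd (x * z) (y * z) -> rdvd x y.
Proof. by move=> hz [c]; rewrite mulrA => /(mulIf hz) ->; exists c. Qed.
Lemma rdvd_cancell x y z : z != 0 -> rdvd (z * x) (z * y) -> rdvd x y.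
Proof. by rewrite ![z * _]mulrC; apply: rdvd_cancel. Qed.
Lemma rdvd_unit e x : e \is a GRing.unit -> rdvd e x.
Proof. by move=> he; exists (x * e^-1); rewrite mulrVK. Qed.
Lemma rdvd_exp x y n : rdvd x y -> rdvd (x ^+ n) (y ^+ n).
Proof. by move=> [c ->]; exists (c ^+ n); rewrite exprMn. Qed.
Lemma rdvd_expS x n : rdvd (x ^+ n) (x ^+ n.+1).
Proof. by exists x; rewrite exprS. Qed.
Lemma rdvd_expl x y m n : (m <= n)%N -> rdvd (x ^+ n) y -> rdvd (x ^+ m) y.
Proof. by move=> hmn; apply: rdvd_trans; exists (x ^+ (n - m)); rewrite -exprD subnK. Qed.
Lemma rdvd_neq0 x y : y != 0 -> rdvd x y -> x != 0.
Proof. by move=> hy [c hc]; apply: contraNneq hy => hx; rewrite hc hx mulr0. Qed.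
Lemma rdvd1_unit x : rdvd x 1 -> x \is a GRing.unit.
Proof. by move=> [c hc]; apply/unitrP; exists c; rewrite -hc mulrC -hc. Qed.

Lemma prime_neq0 p : prime_elt p -> p != 0. Proof. by case. Qed.
Lemma prime_nunit p : prime_elt p -> p \isn't a GRing.unit. Proof. by case=> _ []. Qed.
Lemma prime_dvd p x y : prime_elt p -> rdvd p (x * y) -> rdvd p x \/ rdvd p y.
Proof. by case=> _ [] _; apply. Qed.
Lemma prime_ndvd_unit p e : prime_elt p -> e \is a GRing.unit -> ~ rdvd p e.
Proof.
move=> hp he [c hc]; move: (prime_nunit hp); rewrite hc in he.
by rewrite unitrM in he; case/andP: he => _ ->.
Qed.
Lemma prime_ndvd1 p : prime_elt p -> ~ rdvd p 1.
Proof. by move=> hp; apply: prime_ndvd_unit hp (unitr1 _). Qed.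

Lemma prime_dvd_prod p (s : seq R) :
  prime_elt p -> rdvd p (\prod_(q <- s) q) -> exists2 q, q \in s & rdvd p q.
Proof.
move=> hp; elim: s => [|q s IH]; first by rewrite big_nil => /(prime_ndvd1 hp).
rewrite big_cons => /(prime_dvd hp) [h|/IH [r hr h]].
  by exists q; rewrite ?inE ?eqxx.
by exists r; rewrite ?inE ?hr ?orbT.
Qed.

Lemma prime_dvd_exp p x n : prime_elt p -> rdvd p (x ^+ n) -> rdvd p x.
Proof.
move=> hp; elim: n => [|n IH]; first by rewrite expr0 => /(prime_ndvd1 hp).
by rewrite exprS => /(prime_dvd hp) [//|/IH].
Qed.

Lemma prime_dvd_prime p q : prime_elt p -> prime_elt q -> rdvd p q ->
  exists2 e, e \is a GRing.unit & q = e * p.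
Proof.
move=> hp hq [c hc]; exists c => //.
have : rdvd q (c * p) by rewrite -hc; apply: rdvd_refl.
case/(prime_dvd hq) => [[d hd]|[d hd]].
  have : q * (d * p) = q * 1 by rewrite mulr1 mulrCA mulrA -hd -hc.
  move/(mulfI (prime_neq0 hq)) => hdp.
  have : p \is a GRing.unit by apply/unitrP; exists d; rewrite hdp mulrC hdp.
  by rewrite (negbTE (prime_nunit hp)).
have : q * (c * d) = q * 1 by rewrite mulr1 mulrCA [q * d]mulrC -hd -hc.
move/(mulfI (prime_neq0 hq)) => hcd.
by apply/unitrP; exists d; rewrite hcd mulrC hcd.
Qed.

Lemma prime_assoc p e : prime_elt p -> e \is a GRing.unit -> prime_elt (e * p).
Proof.
move=> hp he; have e0 : e != 0 by apply: contraTneq he => ->; rewrite unitr0.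
split; first by apply: mulf_neq0 => //; apply: prime_neq0.
split; first by rewrite unitrM he /= prime_nunit.
move=> x y hxy.
have : rdvd p (x * y) by apply: rdvd_trans hxy; apply: rdvd_mull; apply: rdvd_refl.
case/(prime_dvd hp) => [[d hd]|[d hd]]; [left|right]; exists (d * e^-1);
  by rewrite hd -mulrA (mulrA e^-1) mulVr ?mul1r.
Qed.

End Dvd.

Lemma nat_min (P : nat -> Prop) : (exists n, P n) ->
  exists n, P n /\ forall m, (m < n)%N -> ~ P m.
Proof.
move=> [n hn]; elim: n {-2}n (leqnn n) hn => [|N IH] n hn Pn.
  by exists n; split=> // m; rewrite (leqn0 n) in hn; move/eqP: hn => ->.
case: (classic (exists m, (m < n)%N /\ P m)) => [[m [hm Pm]]|H].
  by apply: (IH m) => //; rewrite -ltnS; apply: leq_trans hm hn.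
by exists n; split=> // m hm Pm; apply: H; exists m.
Qed.

Lemma nat_max (P : nat -> Prop) N : P 0%N -> (forall k, P k -> (k <= N)%N) ->
  exists n, P n /\ ~ P n.+1.
Proof.
move=> P0 hb.
suff: forall d n, (N - n <= d)%N -> P n -> exists n, P n /\ ~ P n.+1.
  by move=> H; apply: (H (N - 0)%N 0%N (leqnn _) P0).
elim=> [|d IH] n hd Pn.
  exists n; split=> // Pn1; move: (hb _ Pn1); rewrite leqn0 subn_eq0 in hd.
  by move=> h; move: (leq_trans h hd); rewrite ltnn.
case: (classic (P n.+1)) => [Pn1|]; last by exists n.
by apply: (IH n.+1) => //; rewrite subnS; move: hd; case: (N - n)%N.
Qed.

Section Fact.
Variable R : idomainType.
Implicit Types x y z p q c e : R.

Definition hasfact x n := exists e (l : seq R), e \is a GRing.unit /\ size l = n /\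
  (forall q, q \in l -> prime_elt q) /\ x = e * \prod_(q <- l) q.

Lemma hasfact_exists x : factorial_ring R -> x != 0 -> exists n, hasfact x n.
Proof.
move=> hR x0; case: (boolP (x \is a GRing.unit)) => hu.
  by exists 0%N, x, [::]; rewrite big_nil mulr1.
have [l [hl ->]] := hR x x0 hu.
by exists (size l), 1, l; rewrite mul1r unitr1.
Qed.

Lemma hasfact_div p x n : prime_elt p -> hasfact (p * x) n ->
  exists m, n = m.+1 /\ hasfact x m.
Proof.
move=> hp [e [l [he [<- [hl hx]]]]].
suff [e' [l' [he' [hs [hl' ->]]]]] : exists e' (l' : seq R), e' \is a GRing.unit /\
   (size l').+1 = size l /\ (forall q, q \in l' -> prime_elt q) /\ x = e' * \prod_(q <- l') q.
  by exists (size l'); split=> //; exists e', l'.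
elim: l e x he hl hx => [|q l IH] e x he hl hx.
  by exfalso; apply: (prime_ndvd_unit hp he); rewrite big_nil mulr1 in hx; rewrite -hx; exists x; rewrite mulrC.
have hq : prime_elt q by apply: hl; rewrite inE eqxx.
have hl2 : forall r, r \in l -> prime_elt r by move=> r hr; apply: hl; rewrite inE hr orbT.
rewrite big_cons mulrA in hx.
have : rdvd p ((e * q) * \prod_(j <- l) j) by rewrite -hx; exists x; rewrite mulrC.
case/(prime_dvd hp) => [/(prime_dvd hp) [/(prime_ndvd_unit hp he) //|hpq]|[y hy]].
  have [c hc hqc] := prime_dvd_prime hp hq hpq.
  exists (e * c), l; split; first by rewrite unitrM he hc.
  split=> //; split=> //; apply: (mulfI (prime_neq0 hp)); rewrite hx hqc.
  by ring.
have hy2 : p * y = 1 * \prod_(j <- l) j by rewrite mul1r hy mulrC.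
have [e' [l' [he' [hs [hl' hye]]]]] := IH 1 y (unitr1 _) hl2 hy2.
exists (e * e'), (q :: l'); split; first by rewrite unitrM he he'.
split; first by rewrite /= hs.
split; first by move=> r; rewrite inE => /orP [/eqP ->|/hl'].
apply: (mulfI (prime_neq0 hp)); rewrite hx hy hye big_cons.
by ring.
Qed.

Lemma mult_bound p x n k : prime_elt p -> hasfact x n -> rdvd (p ^+ k) x -> (k <= n)%N.
Proof.
move=> hp; elim: k x n => [//|k IH] x n hx [c hc].
have e1 : x = p * (c * p ^+ k) by rewrite hc exprS; ring.
rewrite e1 in hx.
have [m [-> hm]] := hasfact_div hp hx.
by rewrite ltnS; apply: (IH _ _ hm); exists c.
Qed.

Definition exact p n x := rdvd (p ^+ n) x /\ ~ rdvd (p ^+ n.+1) x.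

Lemma exact_exists p x : factorial_ring R -> prime_elt p -> x != 0 -> exists n, exact p n x.
Proof.
move=> hR hp x0; have [N hN] := hasfact_exists hR x0.
have [n [h1 h2]] := nat_max (P := fun k => rdvd (p ^+ k) x) (N := N) (rdvd1 _)
   (fun k hk => mult_bound hp hN hk).
by exists n.
Qed.
Lemma hasfact_prod x n y m : hasfact x n -> hasfact y m -> hasfact (x * y) (n + m).
Proof.
move=> [e [l [he [hs [hl ->]]]]] [e' [l' [he' [hs' [hl' ->]]]]].
exists (e * e'), (l ++ l'); split; first by rewrite unitrM he he'.
split; first by rewrite size_cat hs hs'.
split; first by move=> z; rewrite mem_cat => /orP [/hl|/hl'].
by rewrite big_cat /=; ring.
Qed.

End Fact.

Section Exact.
Variable R : idomainType.
Implicit Types x y z p q c e : R.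

Lemma exact_unique p n m x : exact p n x -> exact p m x -> n = m.
Proof.
move=> [h1 h2] [h3 h4]; case: (ltngtP n m) => // hnm; exfalso.
  by apply: h2; apply: rdvd_expl h3.
by apply: h4; apply: rdvd_expl h1.
Qed.

Lemma exact0 p x : ~ rdvd p x -> exact p 0 x.
Proof. by move=> h; split; [rewrite expr0; apply: rdvd1|rewrite expr1]. Qed.

Lemma exact0_ndvd p x : exact p 0 x -> ~ rdvd p x.
Proof. by case=> _; rewrite expr1. Qed.

Lemma exact_mul p n m x y : prime_elt p -> exact p n x -> exact p m y ->
  exact p (n + m) (x * y).
Proof.
move=> hp [[x' hx] hx2] [[y' hy] hy2]; split.
  by rewrite hx hy exprD; apply: rdvd_mul2; apply: rdvd_mulself.
have nx : ~ rdvd p x' by move=> [c hc]; apply: hx2; exists c; rewrite hx hc exprS; ring.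
have ny : ~ rdvd p y' by move=> [c hc]; apply: hy2; exists c; rewrite hy hc exprS; ring.
move=> h; have : rdvd (p * p ^+ (n + m)) ((x' * y') * p ^+ (n + m)).
  by move: h; rewrite hx hy exprS exprD; congr rdvd; ring.
move/rdvd_cancel => /(_ (expf_neq0 _ (prime_neq0 hp))).
by case/(prime_dvd hp).
Qed.

Lemma exact_unit p e : prime_elt p -> e \is a GRing.unit -> exact p 0 e.
Proof. by move=> hp he; apply: exact0; apply: prime_ndvd_unit. Qed.

Lemma exact_self p : prime_elt p -> exact p 1 p.
Proof.
move=> hp; split; first by rewrite expr1; apply: rdvd_refl.
rewrite expr2 => h; apply: (prime_ndvd1 hp); apply: (@rdvd_cancel _ _ _ p (prime_neq0 hp)).
by rewrite mul1r.
Qed.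

Lemma exact_prime_other p q : prime_elt p -> prime_elt q -> ~ rdvd p q -> exact p 0 q.
Proof. by move=> _ _; apply: exact0. Qed.

Lemma exact_exp p n x k : prime_elt p -> exact p n x -> exact p (n * k) (x ^+ k).
Proof.
move=> hp hx; elim: k => [|k IH]; first by rewrite muln0 expr0; apply: exact_unit (unitr1 _).
by rewrite exprS mulnS; apply: exact_mul.
Qed.

Lemma exact_prod p (I : Type) (r : seq I) (F : I -> R) (N : I -> nat) :
  prime_elt p -> (forall i, exact p (N i) (F i)) ->
  exact p (\sum_(i <- r) N i)%N (\prod_(i <- r) F i).
Proof.
move=> hp h; elim: r => [|i r IH]; first by rewrite !big_nil; apply: exact_unit (unitr1 _).
by rewrite !big_cons; apply: exact_mul.
Qed.
End Exact.

Section PolyPrime.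
Variable R : idomainType.
Implicit Types x y c e : R.
Implicit Types g h q r : {poly R}.

Lemma rdvd_polyC (c : R) g : rdvd (c%:P) g <-> forall i, rdvd c g`_i.
Proof.
split.
  by move=> [d ->] i; rewrite coefMC; exists d`_i.
move=> H; case: (eqVneq c 0) => [c0|c0].
  suff -> : g = 0 by apply: rdvd0.
  by apply/polyP => i; rewrite coef0; case: (H i) => d ->; rewrite c0 mulr0.
pose cf i := proj1_sig (constructive_indefinite_description _ (H i)).
have hcf i : g`_i = cf i * c by rewrite /cf; case: constructive_indefinite_description.
exists (\poly_(i < size g) cf i); apply/polyP => i.
rewrite coefMC coef_poly; case: ltnP => hi; first by apply: hcf.
have gi : g`_i = 0 by rewrite nth_default.
by apply/eqP; rewrite mul0r gi.
Qed.

Lemma polyC_prime (c : R) : prime_elt c -> prime_elt (c%:P : {poly R}).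
Proof.
move=> hc; split; first by rewrite polyC_eq0 prime_neq0.
split; first by rewrite poly_unitE size_polyC (prime_neq0 hc) /= coefC /= (negbTE (prime_nunit hc)).
move=> g h H; apply: NNPP => nH.
have nG : ~ rdvd c%:P g by move=> hh; apply: nH; left.
have nH' : ~ rdvd c%:P h by move=> hh; apply: nH; right.
have [i [hi mi]] : exists i, ~ rdvd c g`_i /\ forall m, (m < i)%N -> ~ ~ rdvd c g`_m.
  have [i [h1 h2]] := nat_min (P := fun i => ~ rdvd c g`_i)
     (not_all_ex_not _ _ (fun hh => nG (proj2 (rdvd_polyC c g) hh))).
  by exists i.
have [j [hj mj]] : exists j, ~ rdvd c h`_j /\ forall m, (m < j)%N -> ~ ~ rdvd c h`_m.
  have [i0 [h1 h2]] := nat_min (P := fun i => ~ rdvd c h`_i)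
     (not_all_ex_not _ _ (fun hh => nH' (proj2 (rdvd_polyC c h) hh))).
  by exists i0.
have := proj1 (rdvd_polyC c _) H (i + j)%N; rewrite coefM.
have hi' : (i < (i + j).+1)%N by rewrite ltnS leq_addr.
rewrite (bigD1 (Ordinal hi')) //= addKn => hs.
have : rdvd c (g`_i * h`_j).
  rewrite -[g`_i * h`_j]subr0; set S := \sum_(_ < _ | _) _ in hs.
  have hS : rdvd c S.
    rewrite /S; apply: rdvd_sumP => k hk0.
    case: (ltngtP k i) => hk.
    - by apply: rdvd_mulr; apply: NNPP; apply: mi.
    - apply: rdvd_mull; apply: NNPP; apply: mj.
      have := ltn_ord k; move: hk; move: (nat_of_ord k) => kk; lia.
    - by move: hk0; rewrite -val_eqE /= hk eqxx.
  have := rdvd_sub hs hS; rewrite addrK.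
  by rewrite subr0.
by case/(prime_dvd hc).
Qed.
End PolyPrime.

Section PolyUFD.
Variable R : idomainType.
Implicit Types x y c e : R.
Implicit Types g h q r : {poly R}.

Lemma rdvdX g : rdvd 'X g <-> g`_0 = 0.
Proof.
split; first by move=> [d ->]; rewrite coefMX.
move=> h0; exists (drop_poly 1 g).
rewrite -{1}(poly_take_drop 1 g) expr1.
suff -> : take_poly 1 g = 0 by rewrite add0r.
by apply/polyP => i; rewrite coef_take_poly coef0; case: i => //=.
Qed.

Lemma Xprime : prime_elt ('X : {poly R}).
Proof.
split; first by rewrite polyX_eq0.
split; first by rewrite poly_unitE size_polyX.
move=> g h; rewrite !rdvdX coefM big_ord1 subnn => /eqP; rewrite mulf_eq0.
by case/orP => /eqP h0; [left|right].
Qed.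

Lemma polyC_ndvdX c : prime_elt c -> ~ rdvd c%:P ('X : {poly R}).
Proof.
move=> hc /rdvd_polyC /(_ 1%N); rewrite coefX eqxx.
by apply: prime_ndvd1.
Qed.

Lemma prime_ndvd_cancel (p : {poly R}) a g : prime_elt p -> ~ rdvd p a ->
  rdvd p (a * g) -> rdvd p g.
Proof. by move=> hp na /(prime_dvd hp) [/na|]. Qed.

Lemma prime_ndvd_exp_cancel (p : {poly R}) a n g : prime_elt p -> ~ rdvd p a ->
  rdvd p (a ^+ n * g) -> rdvd p g.
Proof.
move=> hp na; apply: prime_ndvd_cancel => // /(prime_dvd_exp hp); exact: na.
Qed.

Definition primitive g := forall c, prime_elt c -> ~ rdvd c%:P g.

Hypothesis hR : factorial_ring R.

Lemma nonprim_step g n : hasfact (lead_coef g) n -> ~ primitive g ->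
  exists c g1 m, prime_elt c /\ g = g1 * c%:P /\ n = m.+1 /\ hasfact (lead_coef g1) m.
Proof.
move=> hn hprim.
have [c hc0] := not_all_ex_not _ _ hprim.
have [hc hc1] := imply_to_and _ _ hc0.
have [g1 hg1] := NNPP _ hc1.
rewrite hg1 lead_coefM lead_coefC mulrC in hn.
have [m [hm hm']] := hasfact_div hc hn.
by exists c, g1, m.
Qed.

Lemma content_decomp g : g != 0 ->
  exists c g', c != 0 /\ g = c%:P * g' /\ primitive g'.
Proof.
move=> g0; have lg0 : lead_coef g != 0 by rewrite lead_coef_eq0.
have [n hn] := hasfact_exists hR lg0.
elim: n g g0 lg0 hn => [|n IH] g g0 lg0 hn.
  case: (classic (primitive g)) => hprim; first by exists 1, g; rewrite mul1r oner_neq0.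
  by have [c [g1 [m [_ [_ [//]]]]]] := nonprim_step hn hprim.
case: (classic (primitive g)) => hprim; first by exists 1, g; rewrite mul1r oner_neq0.
have [c [g1 [m [hc [hg1 [[hm] hm']]]]]] := nonprim_step hn hprim.
rewrite -hm in hm'.
have g10 : g1 != 0 by apply: contraNneq g0 => e; rewrite hg1 e mul0r.
have lg10 : lead_coef g1 != 0 by rewrite lead_coef_eq0.
have [c1 [g1' [c10 [e1 hp]]]] := IH g1 g10 lg10 hm'.
exists (c1 * c), g1'; split; first by rewrite mulf_neq0 // prime_neq0.
by split=> //; rewrite hg1 e1 polyCM; ring.
Qed.

Lemma prim_dvdC q c g : primitive q -> c != 0 -> rdvd q (c%:P * g) -> rdvd q g.
Proof.
move=> hq c0; have [n hn] := hasfact_exists hR c0.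
elim: n c c0 g hn => [|n IH] c c0 g [e [l [he [hs [hl hc]]]]].
  move: hs; case: l hl hc => // _; rewrite big_nil mulr1 => -> _ h.
  apply: rdvd_trans h _; exists (e^-1)%:P; rewrite mulrA -polyCM mulVr // mul1r //.
move: hs; case: l hl hc => // pi l hl; rewrite big_cons => hc [hs] [w hw].
have hpi : prime_elt pi by apply: hl; rewrite inE eqxx.
have hPi := polyC_prime hpi.
have hw2 : w * q = pi%:P * ((e * \prod_(j <- l) j)%:P * g) by rewrite -hw hc !polyCM; ring.
have : rdvd pi%:P (w * q) by rewrite hw2; apply: rdvd_mulself2.
case/(prime_dvd hPi) => [[w' hw']|/(hq _ hpi) //].
apply: (IH (e * \prod_(j <- l) j)).
- apply: contraNneq c0 => e0; rewrite hc mulrCA e0 mulr0 //.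
- exists e, l; split=> //; split=> //; split=> // r hr; by apply: hl; rewrite inE hr orbT.
exists w'; apply: (mulfI (prime_neq0 hPi)); rewrite -hw2 hw'; ring.
Qed.

Definition irred g := g != 0 /\ g \isn't a GRing.unit /\
  forall a b, g = a * b -> a \is a GRing.unit \/ b \is a GRing.unit.

Lemma unit_size1 g : g \is a GRing.unit -> size g = 1%N.
Proof. by rewrite poly_unitE => /andP [/eqP]. Qed.

Lemma prim_size1_unit q : primitive q -> size q = 1%N -> q \is a GRing.unit.
Proof.
move=> hq s1; rewrite poly_unitE s1 eqxx /=.
have q0 : q`_0 != 0.
  have : lead_coef q != 0 by rewrite lead_coef_eq0 -size_poly_eq0 s1.
  by rewrite /lead_coef s1.
apply: NNPP => nu.
have [l [hl hq0]] := hR q0 (introN idP nu).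
move: hq0; case: l hl => [|pi l] hl; first by rewrite big_nil => e; move: nu; rewrite e unitr1.
rewrite big_cons => e; apply: (hq pi); first by apply: hl; rewrite inE eqxx.
apply/rdvd_polyC => i; case: i => [|i].
  by rewrite e; apply: rdvd_mulr; apply: rdvd_refl.
by rewrite nth_default ?s1 //; apply: rdvd0.
Qed.

Lemma prim_dvd q g : primitive g -> rdvd q g -> primitive q.
Proof. by move=> hg hqg c hc hcq; apply: (hg c hc); apply: rdvd_trans hcq hqg. Qed.

Lemma ideal_min_dvd q g r (a b y a' b' : {poly R}) : r != 0 -> r = a * q + b * g ->
  (forall r1 a1 b1, r1 != 0 -> r1 = a1 * q + b1 * g -> (size r <= size r1)%N) ->
  y = a' * q + b' * g ->
  exists k, rdvd r ((lead_coef r ^+ k)%:P * y).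
Proof.
move=> r0 hr hmin hy; exists (Pdiv.Idomain.scalp y r).
have := Pdiv.Idomain.divp_eq y r; rewrite -mul_polyC => e.
case: (eqVneq (Pdiv.Idomain.modp y r) 0) => m0.
  by rewrite e m0 addr0; apply: rdvd_mulself.
have : (size r <= size (Pdiv.Idomain.modp y r))%N.
  apply: (hmin _ ((lead_coef r ^+ Pdiv.Idomain.scalp y r)%:P * a' - Pdiv.Idomain.divp y r * a)
                 ((lead_coef r ^+ Pdiv.Idomain.scalp y r)%:P * b' - Pdiv.Idomain.divp y r * b)) => //.
  apply: (addrI (Pdiv.Idomain.divp y r * r)); rewrite -e hy hr; ring.
by rewrite leqNgt Pdiv.Idomain.ltn_modpN0.
Qed.

Lemma prim_irred_prime q : primitive q -> irred q -> prime_elt q.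
Proof.
move=> hq [q0 [qu hirr]]; split=> //; split=> // g h hgh.
case: (classic (rdvd q g)) => hqg; [by left|right].
pose P n := exists r a b, r != 0 /\ size r = n /\ r = a * q + b * g.
have [n [[r [a [b [r0 [hs hr]]]]] hmin]] : exists n, P n /\ forall m, (m < n)%N -> ~ P m.
  by apply: nat_min; exists (size q), q, 1, 0; do !split=> //; ring.
have hmin' : forall r1 a1 b1, r1 != 0 -> r1 = a1 * q + b1 * g -> (size r <= size r1)%N.
  move=> r1 a1 b1 r10 hr1; rewrite hs leqNgt; apply/negP => hlt.
  by apply: (hmin _ hlt); exists r1, a1, b1.
have lr0 : lead_coef r != 0 by rewrite lead_coef_eq0.
have [c [rt [c0 [hrt hprt]]]] := content_decomp r0.
have szr : size r = size rt.
  rewrite hrt size_mul ?polyC_eq0 // ?size_polyC ?c0 //.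
  by apply: contraNneq r0 => e; rewrite hrt e mulr0.
case: (eqVneq (size r) 1%N) => s1.
  have [z hz] : exists z, r = z%:P by exists r`_0; apply: size1_polyC; rewrite s1.
  have z0 : z != 0 by rewrite -polyC_eq0 -hz.
  apply: (prim_dvdC hq z0); rewrite -hz hr mulrDl.
  apply: rdvd_add; first by rewrite -mulrA mulrCA; apply: rdvd_mulr; apply: rdvd_refl.
  by rewrite -mulrA; apply: rdvd_mull.
exfalso.
have dvd_rt : forall (y a' b' : {poly R}), y = a' * q + b' * g -> rdvd rt y.
  move=> y a' b' hy; have [k hk] := ideal_min_dvd r0 hr hmin' hy.
  apply: (prim_dvdC hprt (c := lead_coef r ^+ k)); first by rewrite expf_neq0.
  by apply: rdvd_trans hk; rewrite hrt; apply: rdvd_mull; apply: rdvd_refl.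
have [w hw] := dvd_rt q 1 0 ltac:(ring).
case: (hirr _ _ hw) => [wu|rtu].
  apply: hqg; apply: rdvd_trans (dvd_rt g 0 1 ltac:(ring)); exists w^-1.
  by rewrite hw mulrA mulVr ?mul1r.
by move: s1; rewrite szr unit_size1 // eqxx.
Qed.

Lemma prim_fact n g : (size g <= n)%N -> primitive g -> g != 0 -> exists k, hasfact g k.
Proof.
elim: n g => [|n IH] g hs hg g0; first by move: g0; rewrite -size_poly_eq0 -leqn0 hs.
case: (eqVneq (size g) 1%N) => s1.
  by exists 0%N, g, [::]; rewrite big_nil mulr1 prim_size1_unit.
have gu : g \isn't a GRing.unit by apply: contra s1 => /unit_size1 ->.
case: (classic (irred g)) => hirr.
  exists 1%N, 1, [:: g]; rewrite big_seq1 mul1r unitr1; split=> //; split=> //; split=> //.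
  by move=> z; rewrite inE => /eqP ->; apply: prim_irred_prime.
have [a [b [hab nu]]] : exists a b, g = a * b /\ a \isn't a GRing.unit /\ b \isn't a GRing.unit.
  apply: NNPP => H; apply: hirr; split=> //; split=> // a b hab.
  apply: NNPP => H2; apply: H; exists a, b; split=> //.
  by split; apply/negP => hu; apply: H2; [left|right].
case: nu => au bu.
have a0 : a != 0 by apply: contraNneq g0 => e; rewrite hab e mul0r.
have b0 : b != 0 by apply: contraNneq g0 => e; rewrite hab e mulr0.
have pa : primitive a by apply: (prim_dvd hg); rewrite hab; apply: rdvd_mulself2.
have pb : primitive b by apply: (prim_dvd hg); rewrite hab; apply: rdvd_mulself.
have sa : size a != 1%N by apply: contra au => /eqP; apply: prim_size1_unit.
have sb : size b != 1%N by apply: contra bu => /eqP; apply: prim_size1_unit.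
have sa0 : size a != 0%N by rewrite size_poly_eq0.
have sb0 : size b != 0%N by rewrite size_poly_eq0.
have hsz : size g = (size a + size b).-1 by rewrite hab size_mul.
have [k1 h1] : exists k, hasfact a k.
  apply: IH pa a0; rewrite -ltnS; apply: leq_trans hs; rewrite hsz; move: sa sb sa0 sb0.
  by move: (size a) (size b) => x y; lia.
have [k2 h2] : exists k, hasfact b k.
  apply: IH pb b0; rewrite -ltnS; apply: leq_trans hs; rewrite hsz; move: sa sb sa0 sb0.
  by move: (size a) (size b) => x y; lia.
by exists (k1 + k2)%N; rewrite hab; apply: hasfact_prod.
Qed.

Lemma poly_hasfact g : g != 0 -> exists k, hasfact g k.
Proof.
move=> g0; have [c [g' [c0 [eg hp]]]] := content_decomp g0.
have g'0 : g' != 0 by apply: contraNneq g0 => e; rewrite eg e mulr0.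
rewrite eg.
have [k2 h2] := prim_fact (leqnn _) hp g'0.
have [k1 [e [l [he [hs [hl ->]]]]]] := hasfact_exists hR c0.
exists (k1 + k2)%N; apply: hasfact_prod => //.
have e0 : e != 0 by apply: contraTneq he => ->; rewrite unitr0.
exists e%:P, (map polyC l); split; first by rewrite poly_unitE size_polyC e0 /= coefC /=.
split; first by rewrite size_map.
split; first by move=> z /mapP [y hy ->]; apply: polyC_prime; apply: hl.
by rewrite polyCM rmorph_prod big_map.
Qed.

Lemma poly_factorial : factorial_ring {poly R}.
Proof.
move=> g g0 gu; have [k [e [l [he [hs [hl hg]]]]]] := poly_hasfact g0.
move: hg; case: l hl {hs} => [|q l] hl.
  by rewrite big_nil mulr1 => e1; move: gu; rewrite e1 he.
rewrite big_cons => ->; exists (e * q :: l); split.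
  move=> z; rewrite inE => /orP [/eqP ->|hz]; last by apply: hl; rewrite inE hz orbT.
  by apply: prime_assoc => //; apply: hl; rewrite inE eqxx.
by rewrite big_cons mulrA.
Qed.
End PolyUFD.

Section IdealGen.
Variable A : comNzRingType.
Implicit Types (P : A -> Prop) (x y r : A).

Lemma ideal_pow_mulr P n r x : ideal_pow P n x -> ideal_pow P n (r * x).
Proof.
elim: n r x => [//|n IH] r x [l [hl ->]].
exists [seq (r * xy.1, xy.2) | xy <- l]; split.
  by move=> z /mapP [xy hxy ->] /=; have [h1 h2] := hl xy hxy; split=> //; apply: IH.
by rewrite big_map mulr_sumr; apply: eq_bigr => i _ /=; rewrite mulrA.
Qed.

Lemma ideal_pow_exp P n x : P x -> ideal_pow P n (x ^+ n).
Proof.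
move=> hx; elim: n => [//|n IH].
exists [:: (x ^+ n, x)]; split; last by rewrite big_seq1 exprSr.
by move=> z; rewrite inE => /eqP -> /=.
Qed.

Lemma prime_ideal_unit P x y : prime_ideal P -> y * x = 1 -> ~ P x.
Proof.
move=> [[_ [_ hm]] [h1 _]] hx hPx; apply: h1.
by rewrite -hx; apply: hm.
Qed.

Lemma prime_ideal_exp P x n : prime_ideal P -> P (x ^+ n) -> P x.
Proof.
move=> hP; elim: n => [|n IH]; first by rewrite expr0 => /(proj1 (proj2 hP)).
by rewrite exprS => /(proj2 (proj2 hP)) [|/IH].
Qed.

Lemma prime_ideal_prod P (I : eqType) (s : seq I) (F : I -> A) :
  prime_ideal P -> P (\prod_(i <- s) F i) -> exists i, i \in s /\ P (F i).
Proof.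
move=> hP; elim: s => [|i s IH]; first by rewrite big_nil => /(proj1 (proj2 hP)).
rewrite big_cons => /(proj2 (proj2 hP)) [h|/IH [j [hj h]]]; first by exists i; rewrite mem_head.
by exists j; rewrite inE hj orbT.
Qed.

Lemma ideal_mul P x r : is_ideal P -> P x -> P (r * x).
Proof. by move=> [_ [_ h]]; apply: h. Qed.

Lemma ideal_pow0 P n : ideal_pow P n 0.
Proof. by case: n => [//|n]; exists [::]; rewrite big_nil. Qed.

Lemma ideal_pow_add P n x y : ideal_pow P n x -> ideal_pow P n y -> ideal_pow P n (x + y).
Proof.
case: n => [//|n] [l [hl ->]] [l' [hl' ->]]; exists (l ++ l'); split; last by rewrite big_cat.
by move=> z; rewrite mem_cat => /orP [/hl|/hl'].
Qed.

Lemma ideal_pow_S P n x : ideal_pow P n.+1 x -> ideal_pow P n x.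
Proof.
move=> [l [hl ->]]; elim: l hl => [|xy l IH] hl; first by rewrite big_nil; apply: ideal_pow0.
rewrite big_cons; apply: ideal_pow_add; last by apply: IH => z hz; apply: hl; rewrite inE hz orbT.
by rewrite mulrC; apply: ideal_pow_mulr; case: (hl xy (mem_head _ _)).
Qed.

Lemma sym_pow_S P n x : sym_pow P n.+1 x -> sym_pow P n x.
Proof. by move=> [t [ht h]]; exists t; split=> //; apply: ideal_pow_S. Qed.

Lemma sym_pow_le P n m x : (n <= m)%N -> sym_pow P m x -> sym_pow P n x.
Proof.
move=> hnm; elim: m hnm => [|m IH]; first by rewrite leqn0 => /eqP ->.
rewrite leq_eqVlt => /orP [/eqP -> //|]; rewrite ltnS => h /sym_pow_S; apply: IH h.
Qed.

Lemma ord_at_unique P x n m : ord_at P x n -> ord_at P x m -> n = m.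
Proof.
move=> [h1 h2] [h3 h4]; case: (ltngtP n m) => // hnm; exfalso.
  by apply: h2; apply: sym_pow_le h3.
by apply: h4; apply: sym_pow_le h1.
Qed.

Lemma ord0_gen P x : prime_ideal P -> ~ P x -> ord_at P x 0.
Proof.
move=> hP nx; split; first by exists 1; split=> //; case: hP => _ [].
move=> [t [nt [l [hl e]]]].
have : P (t * x).
  rewrite e; elim: l hl {e} => [|xy l IH] hl; first by rewrite big_nil; case: hP => [[]] //.
  rewrite big_cons; case: hP => [[h0 [hadd hmul]] _]; apply: hadd.
    by apply: hmul; case: (hl xy (mem_head _ _)).
  by apply: IH => z hz; apply: hl; rewrite inE hz orbT.
by case/(proj2 (proj2 hP)).
Qed.
End IdealGen.

Lemma size_map_le (aR rR : nzSemiRingType) (g : aR -> rR) (p : {poly aR}) :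
  (size (map_poly g p) <= size p)%N.
Proof. by rewrite map_polyE; apply: leq_trans (size_Poly _) _; rewrite size_map. Qed.

Section Side.
Variables (B : idomainType) (A : comNzRingType) (iota : {rmorphism B -> A}) (u v : A) (f : B).
Hypothesis hB : factorial_ring B.
Hypothesis f0 : f != 0.
Hypothesis hsurj : forall x : A, exists P, ev2 iota u v P = x.
Hypothesis hker : forall P, ev2 iota u v P = 0 <->
            exists Q, P = Q * (('X : {poly B})%:P * 'X - (f%:P)%:P).

Definition th : {rmorphism {poly B} -> A} := horner_eval u \o map_poly iota.
Arguments th : simpl never.
Local Notation W := (('X : {poly B})%:P * 'X - (f%:P)%:P).

Lemma thE p : th p = (map_poly iota p).[u].
Proof. by rewrite /th /= horner_evalE. Qed.

Lemma thC c : th c%:P = iota c.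
Proof. by rewrite thE map_polyC hornerC. Qed.

Lemma thX : th 'X = u.
Proof. by rewrite thE map_polyX hornerX. Qed.

Lemma thXn n : th 'X^n = u ^+ n.
Proof. by rewrite rmorphXn thX. Qed.

Lemma ev2_sum P : ev2 iota u v P = \sum_(i < size P) th P`_i * v ^+ i.
Proof.
rewrite /ev2; apply: eq_bigr => i _; congr (_ * _).
rewrite thE (horner_coef_wide (n := size P`_i)) ?size_map_le //.
by apply: eq_bigr => j _; rewrite coef_map.
Qed.

Lemma ev2E P : ev2 iota u v P = (map_poly th P).[v].
Proof.
rewrite ev2_sum (horner_coef_wide (n := size P)) ?size_map_le //.
by apply: eq_bigr => i _; rewrite coef_map.
Qed.

Lemma ev2M P Q : ev2 iota u v (P * Q) = ev2 iota u v P * ev2 iota u v Q.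
Proof. by rewrite !ev2E rmorphM hornerM. Qed.

Lemma sizeW : size W = 2%N.
Proof.
have -> : W = ('X : {poly B})%:P * 'X + (- f%:P)%:P by rewrite rmorphN.
by rewrite size_MXaddC polyC_eq0 polyX_eq0 /= size_polyC polyX_eq0.
Qed.

Lemma ev2W : ev2 iota u v W = u * v - iota f.
Proof.
rewrite ev2_sum sizeW !big_ord_recl big_ord0 addr0.
have -> : W`_(@ord0 1) = - f%:P by rewrite coefB coefMX !coefC /= sub0r.
have -> : W`_(bump 0 (@ord0 0)) = 'X by rewrite coefB coefMX !coefC /= subr0.
by rewrite rmorphN thC thX expr0 mulr1 expr1 addrC mulrC.
Qed.

Set Default Proof Using "All".

Lemma uv_f : u * v = iota f.
Proof.
apply/eqP; rewrite -subr_eq0 -ev2W; apply/eqP/hker.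
by exists 1; rewrite mul1r.
Qed.

Lemma ev2C p : ev2 iota u v p%:P = th p.
Proof. by rewrite ev2E map_polyC hornerC. Qed.



Lemma th_inj p : th p = 0 -> p = 0.
Proof.
rewrite -ev2C => /hker [Q hQ].
case: (eqVneq Q 0) => [Q0|Q0]; first by move: hQ; rewrite Q0 mul0r => /polyC_inj.
have W0 : W != 0 by rewrite -size_poly_eq0 sizeW.
have := size_polyC_leq1 p; rewrite hQ size_mul // sizeW addn2 /=.
by rewrite -size_poly_eq0 in Q0; move: Q0; case: (size Q).
Qed.

Lemma th_inj2 p q : th p = th q -> p = q.
Proof. by move=> h; apply/eqP; rewrite -subr_eq0; apply/eqP/th_inj; rewrite rmorphB h subrr. Qed.

Lemma Yprime : prime_elt (('X : {poly B})%:P : {poly {poly B}}).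
Proof. by apply: polyC_prime; apply: Xprime. Qed.

Lemma Y_ndvd_W : ~ rdvd (('X : {poly B})%:P) W.
Proof.
move/rdvd_polyC /(_ 0%N) /rdvdX; rewrite coefB coefMX eqxx coefC eqxx sub0r coefN coefC eqxx.
by move/eqP; rewrite oppr_eq0 (negbTE f0).
Qed.

Lemma u_reg a : u * a = 0 -> a = 0.
Proof.
have [P <-] := hsurj a.
have -> : u * ev2 iota u v P = ev2 iota u v (('X : {poly B})%:P * P) by rewrite ev2M ev2C thX.
move=> /hker [Q hQ].
have : rdvd (('X : {poly B})%:P) (Q * W) by rewrite -hQ; apply: rdvd_mulself2.
case/(prime_dvd Yprime) => [[Q' hQ']|/Y_ndvd_W //].
have : ('X : {poly B})%:P * P = ('X : {poly B})%:P * (Q' * W) by rewrite hQ hQ'; ring.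
move/(mulfI (prime_neq0 Yprime)) => e.
by apply/hker; exists Q'.
Qed.

Lemma uk_reg k a : u ^+ k * a = 0 -> a = 0.
Proof. by elim: k a => [|k IH] a; [rewrite expr0 mul1r|rewrite exprS -mulrA => /u_reg /IH]. Qed.

Lemma normal_form a : exists k p, u ^+ k * a = th p.
Proof.
have [P <-] := hsurj a; rewrite ev2_sum.
exists (size P), (\sum_(i < size P) P`_i * 'X^(size P - i) * (f%:P) ^+ i).
rewrite rmorph_sum mulr_sumr; apply: eq_bigr => i _.
rewrite !rmorphM !rmorphXn thC thX -uv_f exprMn.
have hi : (size P = (size P - i) + i)%N by rewrite subnK // ltnW.
by rewrite {1}hi exprD; ring.
Qed.

Lemma decomp_v a : exists g y, a = th g + v * y.
Proof.
have [P <-] := hsurj a; rewrite ev2_sum.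
case: (size P) => [|n].
  by exists 0, 0; rewrite big_ord0 rmorph0 mulr0 addr0.
rewrite big_ord_recl expr0 mulr1; exists P`_0, (\sum_(i < n) th P`_(bump 0 i) * v ^+ i).
congr (_ + _); rewrite mulr_sumr; apply: eq_bigr => i _; rewrite exprS; ring.
Qed.



Definition Div (q : {poly B}) (m : nat) (a : A) :=
  exists k p, u ^+ k * a = th p /\ rdvd (q ^+ m) p.

Lemma pow_cancel (q c p : {poly B}) m : prime_elt q -> ~ rdvd q c ->
  rdvd (q ^+ m) (c * p) -> rdvd (q ^+ m) p.
Proof.
move=> hq nc; elim: m p => [|m IH] p; first by rewrite expr0 => _; apply: rdvd1.
move=> h; have : rdvd q (c * p) by apply: rdvd_trans h; exists (q ^+ m); rewrite exprSr.
case/(prime_dvd hq) => [/nc //|[p' hp']].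
have : rdvd (q ^+ m * q) ((c * p') * q) by rewrite -exprSr -mulrA -hp'.
move/(rdvd_cancel (prime_neq0 hq)) => /IH h2.
by rewrite hp' exprSr; apply: rdvd_mul2 => //; apply: rdvd_refl.
Qed.

Lemma Div_any q m a k p : prime_elt q -> ~ rdvd q 'X -> Div q m a ->
  u ^+ k * a = th p -> rdvd (q ^+ m) p.
Proof.
move=> hq nX [k0 [p0 [e0 d0]]] e.
have : th ('X^k0 * p) = th ('X^k * p0).
  by rewrite !rmorphM !thXn -e -e0; ring.
move/th_inj2 => e2.
apply: (pow_cancel (c := 'X^k0)) => //.
  by move/(prime_dvd_exp hq).
by rewrite e2; apply: rdvd_mull.
Qed.

Lemma Div0 q m : Div q m 0.
Proof. by exists 0%N, 0; rewrite mulr0 rmorph0; split=> //; apply: rdvd0. Qed.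

Lemma Div_add q m a b : Div q m a -> Div q m b -> Div q m (a + b).
Proof.
move=> [k [p [e d]]] [k' [p' [e' d']]].
exists (k + k')%N, ('X^k' * p + 'X^k * p'); split.
  by rewrite rmorphD !rmorphM !thXn -e -e' exprD; ring.
by apply: rdvd_add; apply: rdvd_mull.
Qed.

Lemma Div_mulr q m r a : Div q m a -> Div q m (r * a).
Proof.
move=> [k [p [e d]]]; have [j [w ew]] := normal_form r.
exists (j + k)%N, (w * p); split; last by apply: rdvd_mull.
by rewrite rmorphM -e -ew exprD; ring.
Qed.

Lemma Div_mul q m n a b : Div q m a -> Div q n b -> Div q (m + n) (a * b).
Proof.
move=> [k [p [e d]]] [k' [p' [e' d']]].
exists (k + k')%N, (p * p'); split; first by rewrite rmorphM -e -e' exprD; ring.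
by rewrite exprD; apply: rdvd_mul2.
Qed.

Lemma Div_th q m g : rdvd (q ^+ m) g -> Div q m (th g).
Proof. by move=> h; exists 0%N, g; rewrite expr0 mul1r. Qed.

Lemma Div_O q a : Div q 0 a.
Proof. by have [k [p e]] := normal_form a; exists k, p; rewrite expr0; split=> //; apply: rdvd1. Qed.

Lemma Div_ideal q : is_ideal (Div q 1).
Proof.
split; first by apply: Div0.
by split; [apply: Div_add|move=> r x; apply: Div_mulr].
Qed.

Lemma ideal_pow_Div q n y : ideal_pow (Div q 1) n y -> Div q n y.
Proof.
elim: n y => [|n IH] y; first by move=> _; apply: Div_O.
move=> [l [hl ->]]; elim: l hl => [|xy l IHl] hl; first by rewrite big_nil; apply: Div0.
rewrite big_cons; apply: Div_add; last by apply: IHl => z hz; apply: hl; rewrite inE hz orbT.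
have [h1 h2] := hl xy (mem_head _ _).
by rewrite -addn1; apply: Div_mul => //; apply: IH.
Qed.

Lemma sym_pow_Div q n a : prime_elt q -> ~ rdvd q 'X ->
  (sym_pow (Div q 1) n a <-> Div q n a).
Proof.
move=> hq nX; split.
  move=> [s [ns /ideal_pow_Div hd]].
  have [j [ps es]] := normal_form s; have [k [pa ea]] := normal_form a.
  have nps : ~ rdvd q ps by move=> h; apply: ns; exists j, ps; rewrite expr1.
  exists k, pa; split=> //; apply: (pow_cancel hq nps).
  by apply: (Div_any hq nX hd (k := (j + k)%N)); rewrite rmorphM -es -ea exprD; ring.
move=> [k [p [e [c hc]]]]; exists (u ^+ k); split.
  move=> hu; have := Div_any hq nX hu (k := 0%N) (p := 'X^k).
  rewrite expr0 mul1r thXn expr1 => /(_ erefl) /(prime_dvd_exp hq); exact: nX.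
rewrite e hc rmorphM rmorphXn.
suff : ideal_pow (Div q 1) n (th q ^+ n) by apply: ideal_pow_mulr.
by apply: ideal_pow_exp; apply: Div_th; rewrite expr1; apply: rdvd_refl.
Qed.

Lemma ord_Div q a n k p : prime_elt q -> ~ rdvd q 'X -> u ^+ k * a = th p ->
  (ord_at (Div q 1) a n <-> exact q n p).
Proof.
move=> hq nX e; rewrite /ord_at !sym_pow_Div //; split.
  move=> [h1 h2]; split; first by apply: Div_any h1 e.
  by move=> h; apply: h2; exists k, p.
by move=> [h1 h2]; split; [exists k, p|move=> h; apply: h2; apply: Div_any h e].
Qed.

Lemma Div1_prime q : prime_elt q -> ~ rdvd q 'X -> prime_ideal (Div q 1).
Proof.
move=> hq nX; split; first by apply: Div_ideal.
split.
  move=> h; have := Div_any hq nX h (k := 0%N) (p := 1).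
  by rewrite expr0 mul1r rmorph1 expr1 => /(_ erefl) /(prime_ndvd1 hq).
move=> x y hxy.
have [j [px ex]] := normal_form x; have [k [py ey]] := normal_form y.
have := Div_any hq nX hxy (k := (j + k)%N) (p := px * py).
rewrite expr1 rmorphM -ex -ey exprD => /(_ ltac:(ring)) /(prime_dvd hq) [h|h].
  by left; exists j, px; rewrite expr1.
by right; exists k, py; rewrite expr1.
Qed.

Lemma Div1_u q : prime_elt q -> ~ rdvd q 'X -> ~ Div q 1 u.
Proof.
move=> hq nX h; have := Div_any hq nX h (k := 0%N) (p := 'X).
by rewrite expr0 mul1r thX expr1 => /(_ erefl).
Qed.

Lemma th_neq0 p : p != 0 -> th p != 0.
Proof. by move=> p0; apply/negP => /eqP /th_inj /eqP; apply/negP. Qed.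


Lemma contains_Div (Q : A -> Prop) : prime_ideal Q -> ~ Q u -> (exists x, x != 0 /\ Q x) ->
  exists q, prime_elt q /\ ~ rdvd q 'X /\ Q (th q) /\ forall a, Div q 1 a -> Q a.
Proof.
move=> hQ nu [x [x0 Qx]].
have [k [p e]] := normal_form x.
have p0 : p != 0.
  by apply: contraNneq x0 => p0; apply/eqP; apply: (uk_reg (k := k)); rewrite e p0 rmorph0.
have [n [c [l [hc [_ [hl ep]]]]]] := hasfact_exists (poly_factorial hB) p0.
have : Q (th p) by rewrite -e; apply: ideal_mul => //; exact: (proj1 hQ).
rewrite ep rmorphM => /(proj2 (proj2 hQ)) [hce|].
  exfalso; apply: (prime_ideal_unit (y := th c^-1) hQ) hce.
  by rewrite -rmorphM mulVr // rmorph1.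
rewrite rmorph_prod => /(prime_ideal_prod hQ) [q [hql hq]].
have hqp : prime_elt q by apply: hl.
have nX : ~ rdvd q 'X.
  move=> hX; have [e' he' eX] := prime_dvd_prime hqp (Xprime B) hX.
  apply: nu; rewrite -thX eX rmorphM; apply: ideal_mul => //; exact: (proj1 hQ).
exists q; split=> //; split=> //; split=> // a [k' [p' [e' [d hd]]]].
have : Q (u ^+ k' * a) by rewrite e' hd expr1 rmorphM; apply: ideal_mul => //; exact: (proj1 hQ).
case/(proj2 (proj2 hQ)) => // /(prime_ideal_exp hQ) //.
Qed.

Lemma Div_incl_eq q1 q2 : prime_elt q1 -> ~ rdvd q1 'X -> prime_elt q2 -> ~ rdvd q2 'X ->
  (forall a, Div q1 1 a -> Div q2 1 a) -> forall a, Div q2 1 a <-> Div q1 1 a.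
Proof.
move=> h1 n1 h2 n2 H a; split; last by apply: H.
have : rdvd q2 q1.
  have := Div_any h2 n2 (H _ (Div_th (m := 1) (q := q1) (g := q1) _)) (k := 0%N) (p := q1).
  by rewrite expr1 expr0 mul1r => /(_ (rdvd_refl _) erefl).
move=> h21 [k [p [e [c hc]]]]; exists k, p; split=> //.
have [e' he' eq1] := prime_dvd_prime h2 h1 h21.
exists (c * e'^-1); rewrite hc !expr1 eq1 -mulrA (mulrA e'^-1) mulVr ?mul1r //.
Qed.

Lemma Div_HOP q : prime_elt q -> ~ rdvd q 'X -> height_one (Div q 1).
Proof.
move=> hq nX; split; first by apply: Div1_prime.
split.
  exists (th q); split; first by apply: th_neq0; apply: prime_neq0.
  by apply: Div_th; rewrite expr1; apply: rdvd_refl.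
move=> Q' hQ' sub; case: (classic (forall x, Q' x -> x = 0)) => [H|H]; [by left|right].
have [x [Q'x x0]] : exists x, Q' x /\ x != 0.
  apply: NNPP => H2; apply: H => x hx; apply: NNPP => x0; apply: H2; exists x; split=> //.
  by apply/eqP.
have nu : ~ Q' u by move=> /sub; apply: Div1_u.
have [q1 [hq1 [nX1 [_ sub1]]]] := contains_Div hQ' nu (ex_intro _ x (conj x0 Q'x)).
have e := Div_incl_eq hq1 nX1 hq nX (fun a h => sub a (sub1 a h)).
by move=> a; split; [apply: sub|move/e/sub1].
Qed.

Lemma HOP_Div (Q : A -> Prop) : height_one Q -> ~ Q u ->
  exists q, prime_elt q /\ ~ rdvd q 'X /\ forall a, Q a <-> Div q 1 a.
Proof.
move=> [hQ [[x [x0 Qx]] hmin]] nu.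
have [q [hq [nX [_ sub]]]] := contains_Div hQ nu (ex_intro _ x (conj x0 Qx)).
exists q; split=> //; split=> //.
case: (hmin _ (Div1_prime hq nX) sub) => [H|H a]; last by split; move/H.
exfalso; have := H _ (Div_th (m := 1) (g := q) (q := q) ltac:(rewrite expr1; apply: rdvd_refl)).
by apply/eqP; apply: th_neq0; apply: prime_neq0.
Qed.

Lemma Div_sub_v (c : B) (Q : A -> Prop) : prime_ideal Q -> Q v -> Q (iota c) ->
  prime_elt c -> rdvd c f -> forall a, Div c%:P 1 a -> Q a.
Proof.
move=> hQ Qv Qc hc [d hd] a [k [p [e dp]]].
have [g [y ea]] := decomp_v a.
have [m [w ey]] := normal_form y.
have key : th ('X^(m.+1) * p) = th ('X^((k + m).+1) * g + 'X^k * f%:P * w).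
  rewrite rmorphD !rmorphM !thXn thC -e -ey -uv_f ea !exprS exprD; ring.
move/th_inj2: key => key.
have hcg : rdvd c%:P g.
  have hC := polyC_prime hc.
  apply: (prime_ndvd_exp_cancel (a := 'X) (n := (k + m).+1) hC (polyC_ndvdX hc)).
  have -> : 'X^((k + m).+1) * g = 'X^(m.+1) * p - 'X^k * f%:P * w by rewrite key addrK.
  apply: rdvd_sub; first by apply: rdvd_mull; rewrite expr1 in dp.
  by exists ('X^k * d%:P * w); rewrite hd polyCM; ring.
case: hcg => g' hg'.
rewrite ea; case: hQ => [[_ [hadd hmul]] _]; apply: hadd; last by rewrite mulrC; apply: hmul.
by rewrite hg' rmorphM thC; apply: hmul.
Qed.

Lemma ord_Div_th q g n : prime_elt q -> ~ rdvd q 'X ->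
  (ord_at (Div q 1) (th g) n <-> exact q n g).
Proof.
move=> hq nX; have e : u ^+ 0 * th g = th g by rewrite expr0 mul1r.
exact: ord_Div _ hq nX e.
Qed.

Lemma ord_Div_mul q x y n m : prime_elt q -> ~ rdvd q 'X ->
  ord_at (Div q 1) x n -> ord_at (Div q 1) y m -> ord_at (Div q 1) (x * y) (n + m).
Proof.
move=> hq nX hx hy.
have [k [px ex]] := normal_form x; have [k' [py ey]] := normal_form y.
have e : u ^+ (k + k') * (x * y) = th (px * py) by rewrite rmorphM -ex -ey exprD; ring.
apply/(ord_Div _ hq nX e).
apply: exact_mul => //; [apply/(ord_Div _ hq nX ex)|apply/(ord_Div _ hq nX ey)] => //.
Qed.

Lemma ord_Div_exists q x : prime_elt q -> ~ rdvd q 'X -> x != 0 ->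
  exists n, ord_at (Div q 1) x n.
Proof.
move=> hq nX x0; have [k [px ex]] := normal_form x.
have px0 : px != 0.
  by apply: contraNneq x0 => e0; apply/eqP; apply: (uk_reg (k := k)); rewrite ex e0 rmorph0.
have [n hn] := exact_exists (poly_factorial hB) hq px0.
by exists n; apply/(ord_Div _ hq nX ex).
Qed.

Lemma A_dom (x y : A) : x != 0 -> y != 0 -> x * y != 0.
Proof.
move=> x0 y0; apply/negP => /eqP xy0.
have [k [px ex]] := normal_form x; have [k' [py ey]] := normal_form y.
have : th (px * py) = 0 by rewrite rmorphM -ex -ey mulrACA xy0 mulr0.
move/th_inj/eqP; rewrite mulf_eq0 => /orP [] /eqP e0.
  by move/negP: x0; apply; apply/eqP; apply: (uk_reg (k := k)); rewrite ex e0 rmorph0.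
by move/negP: y0; apply; apply/eqP; apply: (uk_reg (k := k')); rewrite ey e0 rmorph0.
Qed.
End Side.

Lemma ev2_horner (B : idomainType) (A : comNzRingType) (iota : {rmorphism B -> A}) (u v : A) P :
  ev2 iota u v P = ((map_poly (map_poly iota) P).[v%:P]).[u].
Proof.
rewrite ev2_sum (horner_coef_wide (n := size P) (p := map_poly (map_poly iota) P)) ?size_map_le // horner_sum.
apply: eq_bigr => i _; rewrite coef_map -rmorphXn hornerM hornerC.
by rewrite thE.
Qed.

Lemma ev2_swap (B : idomainType) (A : comNzRingType) (iota : {rmorphism B -> A}) (u v : A) P :
  ev2 iota v u (swapXY P) = ev2 iota u v P.
Proof.
by rewrite !ev2_horner -swapXY_map horner2_swapXY.
Qed.

Lemma swapW (B : idomainType) (f : B) :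
  swapXY (('X : {poly B})%:P * 'X - (f%:P)%:P) = ('X : {poly B})%:P * 'X - (f%:P)%:P.
Proof.
by rewrite rmorphB rmorphM /= swapXY_X swapXY_polyC swapXY_polyC map_polyX map_polyC mulrC.
Qed.

Lemma swap_hsurj (B : idomainType) (A : comNzRingType) (iota : {rmorphism B -> A}) (u v : A) :
  (forall x : A, exists P, ev2 iota u v P = x) -> (forall x : A, exists P, ev2 iota v u P = x).
Proof. by move=> h x; have [P hP] := h x; exists (swapXY P); rewrite ev2_swap. Qed.

Lemma swap_hker (B : idomainType) (A : comNzRingType) (iota : {rmorphism B -> A}) (u v : A) (f : B) :
  (forall P, ev2 iota u v P = 0 <-> exists Q, P = Q * (('X : {poly B})%:P * 'X - (f%:P)%:P)) ->
  (forall P, ev2 iota v u P = 0 <-> exists Q, P = Q * (('X : {poly B})%:P * 'X - (f%:P)%:P)).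
Proof.
move=> h P; split.
  rewrite -{1}(swapXYK P) ev2_swap => /h [Q hQ]; exists (swapXY Q).
  by rewrite -(swapXYK P) hQ rmorphM /= swapW.
move=> [Q ->]; rewrite -{1}(swapXYK (Q * _)) ev2_swap; apply/h; exists (swapXY Q).
by rewrite rmorphM /= swapW.
Qed.

Section Gen2.
Variable R : idomainType.
Implicit Types x y z p q c e : R.

Lemma prime_dvd_bigprod p (I : Type) (r : seq I) (F : I -> R) :
  prime_elt p -> rdvd p (\prod_(i <- r) F i) -> exists i, rdvd p (F i).
Proof.
move=> hp; elim: r => [|i r IH]; first by rewrite big_nil => /(prime_ndvd1 hp).
by rewrite big_cons => /(prime_dvd hp) [h|/IH //]; exists i.
Qed.

Lemma assoc_of_dvd x y : x != 0 -> rdvd x y -> rdvd y x ->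
  exists2 c, c \is a GRing.unit & x = c * y.
Proof.
move=> x0 [c hc] [d hd]; exists d => //.
have : x * (c * d) = x * 1 by rewrite mulr1 {2}hd hc; ring.
move/(mulfI x0) => h; apply/unitrP; exists c; split => //; by rewrite mulrC.
Qed.


Hypothesis hR : factorial_ring R.

Lemma dvd_of_mult k x y : hasfact x k -> y != 0 ->
  (forall q n, prime_elt q -> exact q n x -> exact q n y) -> rdvd x y.
Proof.
elim: k x y => [|k IH] x y [e [l [he [hs [hl ->]]]]] y0 H.
  by move: H hs; case: l hl => // _ _ _; rewrite big_nil mulr1; apply: rdvd_unit.
move: H hs; case: l hl => // q l hl H [hs].
have hq : prime_elt q by apply: hl; rewrite mem_head.
set x' := e * \prod_(j <- l) j.
have ex : e * \prod_(j <- q :: l) j = q * x' by rewrite big_cons /x'; ring.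
rewrite ex in H *.
have x'0 : x' != 0.
  rewrite /x' mulf_neq0 //; first by apply: contraTneq he => ->; rewrite unitr0.
  rewrite prodf_seq_neq0; apply/allP => j hj /=; apply: prime_neq0; apply: hl.
  by rewrite inE hj orbT.
have [n' hn'] := exact_exists hR hq x'0.
have := H q (1 + n')%N hq (exact_mul hq (exact_self hq) hn').
move=> [hd _]; have [y' hy'] : rdvd q y by apply: rdvd_trans hd; rewrite exprS; apply: rdvd_mulr; apply: rdvd_refl.
have y'0 : y' != 0 by apply: contraNneq y0 => e0; rewrite hy' e0 mul0r.
have : rdvd x' y'.
  apply: (IH x' y') => //.
    by exists e, l; split=> //; split=> //; split=> // j hj; apply: hl; rewrite inE hj orbT.
  move=> r n hr hxr.
  have [m hm] := exact_exists hR hr (prime_neq0 hq).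
  have h1 := H r (m + n)%N hr (exact_mul hr hm hxr).
  have [n'' hn''] := exact_exists hR hr y'0.
  have h2 : exact r (m + n'') y by rewrite hy' mulrC; apply: exact_mul.
  by have := exact_unique h1 h2 => /eqP; rewrite eqn_add2l => /eqP ->.
by move=> [c hc]; exists c; rewrite hy' hc; ring.
Qed.
End Gen2.

Lemma HOP_eq (A : comNzRingType) (P1 P2 : HOP A) : sval P1 = sval P2 -> P1 = P2.
Proof.
case: P1 P2 => [P1 h1] [P2 h2] /= e; subst P2.
by rewrite (Classical_Prop.proof_irrelevance _ h1 h2).
Qed.

Lemma pred_ext (A : Type) (P Q : A -> Prop) : (forall a, P a <-> Q a) -> P = Q.
Proof.
move=> h; apply: FunctionalExtensionality.functional_extensionality => a.
by apply: PropExtensionality.propositional_extensionality.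
Qed.

Section Main.
Variables (B : idomainType) (A : comNzRingType) (iota : {rmorphism B -> A}) (u v : A) (f : B).
Variables (s : nat) (p : 'I_s -> B) (a : 'I_s -> nat).
Hypothesis hB : factorial_ring B.
Hypothesis f0 : f != 0.
Hypothesis hp : forall i, prime_elt (p i).
Hypothesis hna : forall i j, i != j -> ~ associated (p i) (p j).
Hypothesis ha : forall i, (0 < a i)%N.
Hypothesis hfprod : f = \prod_(i < s) p i ^+ a i.
Hypothesis hsurj : forall x : A, exists P, ev2 iota u v P = x.
Hypothesis hker : forall P, ev2 iota u v P = 0 <->
            exists Q, P = Q * (('X : {poly B})%:P * 'X - (f%:P)%:P).

Let hsurjV := swap_hsurj hsurj.
Let hkerV := swap_hker hker.

Local Notation thu := (th iota u).
Local Notation thv := (th iota v).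
Local Notation Divu := (Div iota u).
Local Notation Divv := (Div iota v).

Definition Dv i := Divv ((p i)%:P) 1.

Lemma pCprime i : prime_elt ((p i)%:P : {poly B}).
Proof. exact: polyC_prime. Qed.
Lemma pCnX i : ~ rdvd ((p i)%:P) ('X : {poly B}).
Proof. exact: polyC_ndvdX. Qed.

Lemma Dv_HOP i : height_one (Dv i).
Proof. exact: (Div_HOP hB f0 hsurjV hkerV (pCprime i) (@pCnX i)). Qed.

Definition hD i : HOP A := exist _ (Dv i) (Dv_HOP i).

Lemma fP : (f%:P : {poly B}) = \prod_(i < s) ((p i)%:P) ^+ a i.
Proof. by rewrite hfprod rmorph_prod; apply: eq_bigr => i _; rewrite rmorphXn. Qed.

Lemma f_dvd i : rdvd (p i) f.
Proof.
rewrite hfprod (bigD1 i) //=; apply: rdvd_mulr.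
by rewrite -(prednK (ha i)) exprS; apply: rdvd_mulr; apply: rdvd_refl.
Qed.

Lemma pC_dvd i j : rdvd ((p i)%:P) ((p j)%:P : {poly B}) -> i = j.
Proof.
move/rdvd_polyC => /(_ 0%N); rewrite coefC eqxx => hij.
case: (eqVneq i j) => // nij; exfalso; apply: (hna nij).
have [e he ej] := prime_dvd_prime (hp i) (hp j) hij.
split=> //; exists e^-1; rewrite ej mulrA mulVr ?mul1r //.
Qed.

Lemma uvV : v * u = iota f.
Proof. exact: (uv_f hB f0 hsurjV hkerV). Qed.

Lemma Dv_u i : Dv i u.
Proof.
exists 1%N, f%:P; split; first by rewrite expr1 uvV thC.
rewrite expr1; have [c hc] := f_dvd i; exists c%:P; by rewrite hc polyCM.
Qed.

Lemma Dv_p i : Dv i (iota (p i)).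
Proof. by rewrite -(thC iota v); apply: (Div_th hB f0 hsurjV hkerV); rewrite expr1; apply: rdvd_refl. Qed.

Lemma Dv_pj i j : Dv i (iota (p j)) -> i = j.
Proof.
move=> h; apply: pC_dvd.
have e : v ^+ 0 * iota (p j) = thv (p j)%:P by rewrite expr0 mul1r thC.
by have := Div_any hB f0 hsurjV hkerV (pCprime i) (@pCnX i) h e; rewrite expr1.
Qed.

Lemma Dv_inj i j : Dv i = Dv j -> i = j.
Proof. by move=> e; apply: Dv_pj; rewrite e; apply: Dv_p. Qed.

Lemma hD_inj i j : hD i = hD j -> i = j.
Proof. by move=> e; apply: Dv_inj; move: (f_equal sval e). Qed.

Lemma Div_assoc (w : A) (q1 q2 : {poly B}) e : e \is a GRing.unit -> q1 = e * q2 ->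
  forall x, Div iota w q1 1 x <-> Div iota w q2 1 x.
Proof.
move=> he eq x; split=> [[k [pp [ek [c hc]]]]|[k [pp [ek [c hc]]]]]; exists k, pp; split=> //.
  by exists (c * e); rewrite hc !expr1 eq mulrA.
by exists (c * e^-1); rewrite hc !expr1 eq -mulrA (mulrA e^-1) mulVr ?mul1r.
Qed.

Definition Utype (P : HOP A) := ~ sval P u /\
  exists q, prime_elt q /\ ~ rdvd q 'X /\ sval P = Divu q 1.

Lemma classify (P : HOP A) : Utype P \/ exists i, P = hD i.
Proof.
case: (classic (sval P u)) => Pu; last first.
  left; split=> //; have [q [hq [nX H]]] := HOP_Div hB f0 hsurj hker (proj2_sig P) Pu.
  by exists q; split=> //; split=> //; apply: pred_ext.
right; case: P Pu => Q hQ /= Qu.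
have [hQp [_ hmin]] := hQ.
have nv : ~ Q v.
  move=> Qv.
  have : Q (iota f) by rewrite -(uv_f hB f0 hsurj hker) mulrC; apply: ideal_mul => //; exact: (proj1 hQp).
  rewrite hfprod rmorph_prod => /(prime_ideal_prod hQp) [i [_]].
  rewrite rmorphXn => /(prime_ideal_exp hQp) Qpi.
  have sub := Div_sub_v hB f0 hsurj hker hQp Qv Qpi (hp i) (f_dvd i).
  case: (hmin _ (Div1_prime hB f0 hsurj hker (pCprime i) (@pCnX i)) sub) => [H|H].
    have := H _ (Div_th hB f0 hsurj hker (m := 1) (q := (p i)%:P) (g := (p i)%:P) ltac:(rewrite expr1; apply: rdvd_refl)).
    by apply/eqP; apply: (th_neq0 hB f0 hsurj hker); apply: prime_neq0; apply: pCprime.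
  by apply: (Div1_u hB f0 hsurj hker (pCprime i) (@pCnX i)); apply/H.
have [q [hq [nX H]]] := HOP_Div hB f0 hsurjV hkerV hQ nv.
have : rdvd q (f%:P).
  have e : v ^+ 1 * u = thv f%:P by rewrite expr1 uvV thC.
  by have := Div_any hB f0 hsurjV hkerV hq nX (proj1 (H u) Qu) e; rewrite expr1.
rewrite fP => /(prime_dvd_bigprod hq) [i /(prime_dvd_exp hq) hi].
exists i; apply: HOP_eq => /=.
have [e he ei] := prime_dvd_prime hq (pCprime i) hi.
apply: pred_ext => x; rewrite H /Dv; symmetry; exact: (Div_assoc v he ei x).
Qed.

Definition ordA (P : HOP A) (x : A) : nat :=
  epsilon (inhabits 0%N) (fun n => ord_at (sval P) x n).

Lemma ord_exists (P : HOP A) x : x != 0 -> exists n, ord_at (sval P) x n.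
Proof.
move=> x0; case: (classify P) => [[Pu [q [hq [nX ->]]]]|[i ->]].
  exact: (ord_Div_exists hB f0 hsurj hker hq nX x0).
exact: (ord_Div_exists hB f0 hsurjV hkerV (pCprime i) (@pCnX i) x0).
Qed.

Lemma ordA_eq (P : HOP A) x n : ord_at (sval P) x n -> ordA P x = n.
Proof.
move=> h; have := epsilon_spec (inhabits 0%N) (fun n => ord_at (sval P) x n) (ex_intro _ n h).
by rewrite -/(ordA P x) => h2; apply: ord_at_unique h2 h.
Qed.

Lemma ordA_spec (P : HOP A) x : x != 0 -> ord_at (sval P) x (ordA P x).
Proof.
by move=> /(ord_exists P) [n h]; rewrite (ordA_eq h).
Qed.

Lemma A_domM (x y : A) : x != 0 -> y != 0 -> x * y != 0.
Proof. exact: (A_dom hB f0 hsurj hker). Qed.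

Lemma A_expf (x : A) n : x != 0 -> x ^+ n != 0.
Proof.
move=> x0; elim: n => [|n IH]; last by rewrite exprS; apply: A_domM.
by rewrite expr0 oner_neq0.
Qed.

Lemma ordA_mul (P : HOP A) x y : x != 0 -> y != 0 ->
  ordA P (x * y) = (ordA P x + ordA P y)%N.
Proof.
move=> x0 y0; apply: ordA_eq.
have hx := ordA_spec P x0; have hy := ordA_spec P y0.
case: (classify P) => [[Pu [q [hq [nX eP]]]]|[i eP]]; rewrite eP in hx hy *.
  exact: (ord_Div_mul hB f0 hsurj hker hq nX hx hy).
exact: (ord_Div_mul hB f0 hsurjV hkerV (pCprime i) (@pCnX i) hx hy).
Qed.

Lemma ordA_notin (P : HOP A) x : ~ sval P x -> ordA P x = 0%N.
Proof. by move=> h; apply: ordA_eq; apply: ord0_gen => //; case: (proj2_sig P). Qed.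

Lemma ordA_unit (P : HOP A) x y : y * x = 1 -> ordA P x = 0%N.
Proof.
move=> h; apply: ordA_notin; apply: (prime_ideal_unit (y := y)) h.
by case: (proj2_sig P).
Qed.

Lemma exact_f i : exact ((p i)%:P) (a i) (f%:P : {poly B}).
Proof.
rewrite fP.
have H : forall j, exact ((p i)%:P) (if j == i then a i else 0%N) (((p j)%:P : {poly B}) ^+ a j).
  move=> j; case: eqP => [->|nij].
    by rewrite -[X in exact _ X]mul1n; apply: exact_exp; [apply: pCprime|apply: exact_self; apply: pCprime].
  apply: exact0 => /(prime_dvd_exp (pCprime i)) /pC_dvd eij.
  by apply: nij.
have := exact_prod (index_enum 'I_s) (pCprime i) H.
by rewrite -big_mkcond big_pred1_eq.
Qed.

Lemma ordA_u_D i : ordA (hD i) u = a i.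
Proof.
apply: ordA_eq => /=.
have e : v ^+ 1 * u = thv f%:P by rewrite expr1 uvV thC.
exact/(ord_Div hB f0 hsurjV hkerV _ (pCprime i) (@pCnX i) e)/exact_f.
Qed.

Lemma ordA_u_U (P : HOP A) : Utype P -> ordA P u = 0%N.
Proof. by case=> h _; apply: ordA_notin. Qed.

Lemma ordA_th_U (P : HOP A) q g n : sval P = Divu q 1 -> prime_elt q -> ~ rdvd q 'X ->
  g != 0 -> (ordA P (thu g) = n <-> exact q n g).
Proof.
move=> eP hq nX g0; split.
  move=> <-; have := ordA_spec P (th_neq0 hB f0 hsurj hker g0); rewrite eP.
  by move/(ord_Div_th hB f0 hsurj hker _ _ hq nX).
move=> h; apply: ordA_eq; rewrite eP.
exact/(ord_Div_th hB f0 hsurj hker _ _ hq nX).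
Qed.

Definition Urep (D : HOP A -> int) (g h : {poly B}) := g != 0 /\ h != 0 /\
  ~ rdvd 'X g /\ ~ rdvd 'X h /\
  forall P : HOP A, Utype P -> D P = (ordA P (thu g))%:Z - (ordA P (thu h))%:Z.

Definition Wv (g h : {poly B}) i : int := (ordA (hD i) (thu g))%:Z - (ordA (hD i) (thu h))%:Z.

Lemma thu_neq0 g : g != 0 -> thu g != 0.
Proof. exact: (th_neq0 hB f0 hsurj hker). Qed.

Lemma X_ndvd_mul (g h : {poly B}) : ~ rdvd 'X g -> ~ rdvd 'X h -> ~ rdvd 'X (g * h).
Proof. by move=> ng nh /(prime_dvd (Xprime B)) []. Qed.

Lemma X_ndvd_exp (g : {poly B}) n : ~ rdvd 'X g -> ~ rdvd 'X (g ^+ n).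
Proof. by move=> ng /(prime_dvd_exp (Xprime B)). Qed.

Definition hU q (hq : prime_elt q) (nX : ~ rdvd q 'X) : HOP A :=
  exist _ (Divu q 1) (Div_HOP hB f0 hsurj hker hq nX).

Lemma hU_U q hq nX : Utype (@hU q hq nX).
Proof.
split; first by apply: (Div1_u hB f0 hsurj hker hq nX).
by exists q.
Qed.

Lemma unit_dvd_X (q : {poly B}) y : prime_elt q -> rdvd q 'X -> rdvd q y -> rdvd 'X y.
Proof.
move=> hq hX [c hc]; have [e he eX] := prime_dvd_prime hq (Xprime B) hX.
by exists (c * e^-1); rewrite hc eX mulrA -(mulrA c) mulVr ?mulr1.
Qed.

Lemma rep_key D g h g' h' : Urep D g h -> Urep D g' h' ->
  forall q n, prime_elt q -> exact q n (g * h') -> exact q n (g' * h).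
Proof.
move=> [g0 [h0 [ng [nh Hr]]]] [g'0 [h'0 [ng' [nh' Hr']]]] q n hq hex.
case: (classic (rdvd q 'X)) => hX.
  have n0 : n = 0%N.
    apply: (exact_unique hex); apply: exact0 => /(unit_dvd_X hq hX).
    exact: X_ndvd_mul.
  by rewrite n0; apply: exact0 => /(unit_dvd_X hq hX); apply: X_ndvd_mul.
set P := hU hq hX.
have e1 := Hr P (hU_U hq hX); have e1' := Hr' P (hU_U hq hX).
have e2 : (ordA P (thu g) + ordA P (thu h'))%N = (ordA P (thu g') + ordA P (thu h))%N.
  by move: e1 e1'; lia.
have := proj2 (@ordA_th_U P q (g * h') n erefl hq hX (mulf_neq0 g0 h'0)) hex.
rewrite rmorphM ordA_mul ?thu_neq0 // e2 -ordA_mul ?thu_neq0 // -rmorphM.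
by move/(@ordA_th_U P q (g' * h) n erefl hq hX (mulf_neq0 g'0 h0)) => h1; apply: h1.
Qed.

Lemma rep_unique D g h g' h' : Urep D g h -> Urep D g' h' ->
  forall i, Wv g h i = Wv g' h' i.
Proof.
move=> r1 r2 i.
have [g0 [h0 _]] := r1; have [g'0 [h'0 _]] := r2.
have hPF := poly_factorial hB.
have d1 : rdvd (g * h') (g' * h).
  have [k hk] := hasfact_exists hPF (mulf_neq0 g0 h'0).
  apply: (dvd_of_mult hPF hk (mulf_neq0 g'0 h0)) => q n hq; exact: rep_key r1 r2 q n hq.
have d2 : rdvd (g' * h) (g * h').
  have [k hk] := hasfact_exists hPF (mulf_neq0 g'0 h0).
  apply: (dvd_of_mult hPF hk (mulf_neq0 g0 h'0)) => q n hq; exact: rep_key r2 r1 q n hq.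
have [c hc ec] := assoc_of_dvd (mulf_neq0 g0 h'0) d1 d2.
have c0 : c != 0 by apply: contraTneq hc => ->; rewrite unitr0.
have oc : ordA (hD i) (thu c) = 0%N.
  by apply: (@ordA_unit (hD i) (thu c) (thu c^-1)); rewrite -rmorphM mulVr // rmorph1.
have : ordA (hD i) (thu (g * h')) = ordA (hD i) (thu (c * (g' * h))) by rewrite ec.
rewrite !rmorphM !ordA_mul ?thu_neq0 ?A_domM ?thu_neq0 // oc add0n.
by rewrite /Wv; lia.
Qed.

Lemma rep_add D1 D2 g1 h1 g2 h2 : Urep D1 g1 h1 -> Urep D2 g2 h2 ->
  Urep (fun P => D1 P + D2 P) (g1 * g2) (h1 * h2).
Proof.
move=> [g10 [h10 [ng1 [nh1 H1]]]] [g20 [h20 [ng2 [nh2 H2]]]].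
split; first by rewrite mulf_neq0.
split; first by rewrite mulf_neq0.
split; first by apply: X_ndvd_mul.
split; first by apply: X_ndvd_mul.
move=> P hP; rewrite H1 // H2 // !rmorphM !ordA_mul ?thu_neq0 //; lia.
Qed.

Lemma Wv_mul g1 h1 g2 h2 i : g1 != 0 -> h1 != 0 -> g2 != 0 -> h2 != 0 ->
  Wv (g1 * g2) (h1 * h2) i = Wv g1 h1 i + Wv g2 h2 i.
Proof. by move=> *; rewrite /Wv !rmorphM !ordA_mul ?thu_neq0 //; lia. Qed.

Lemma ordA_exp (P : HOP A) x n : x != 0 -> ordA P (x ^+ n) = (n * ordA P x)%N.
Proof.
move=> x0; elim: n => [|n IH].
  by rewrite expr0 mul0n; apply: (@ordA_unit P 1 1); rewrite mulr1.
by rewrite exprS ordA_mul ?A_expf // IH mulSn.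
Qed.

Lemma ordA_q0_same (P : HOP A) q0 : prime_elt q0 -> ~ rdvd q0 'X ->
  sval P = Divu q0 1 -> ordA P (thu q0) = 1%N.
Proof.
move=> hq nX eP; apply/(@ordA_th_U P q0 q0 1 eP hq nX (prime_neq0 hq)).
exact: exact_self.
Qed.

Lemma ordA_q0_other (P : HOP A) q0 : prime_elt q0 -> ~ rdvd q0 'X ->
  Utype P -> sval P <> Divu q0 1 -> ordA P (thu q0) = 0%N.
Proof.
move=> hq0 nX0 [_ [q [hq [nX eP]]]] ne.
apply/(@ordA_th_U P q q0 0 eP hq nX (prime_neq0 hq0)).
apply: exact0 => hqq0; apply: ne; rewrite eP.
have [e he e0] := prime_dvd_prime hq hq0 hqq0.
apply: pred_ext => x; symmetry; exact: (Div_assoc u he e0 x).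
Qed.

Lemma X_ndvd_prime (q : {poly B}) : prime_elt q -> ~ rdvd q 'X -> ~ rdvd 'X q.
Proof.
move=> hq nX hXq; have [e he eq] := prime_dvd_prime (Xprime B) hq hXq.
by apply: nX; exists e^-1; rewrite eq mulrA mulVr ?mul1r.
Qed.

Lemma Utype_not (P : HOP A) : ~ sval P u -> Utype P.
Proof.
move=> nu; case: (classify P) => // [[i ei]]; exfalso; apply: nu; rewrite ei; exact: Dv_u.
Qed.

Lemma rep_exists D : weil_div D -> exists g h, Urep D g h.
Proof.
case=> l; elim: l D => [|P0 l IH] D hDl.
  exists 1, 1; split; first exact: oner_neq0.
  split; first exact: oner_neq0.
  have nX1 : ~ rdvd ('X : {poly B}) 1 by apply: prime_ndvd1; apply: Xprime.
  split=> //; split=> // P _.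
  rewrite rmorph1 (@ordA_unit P 1 1) ?mulr1 // subrr.
  by apply: NNPP => hD0; apply: (hDl P hD0).
pose D' := fun P : HOP A => match excluded_middle_informative (sval P = P0) with
                           | left _ => 0 | right _ => D P end.
have [g [h hr]] : exists g h, Urep D' g h.
  apply: IH => P; rewrite /D'; case: excluded_middle_informative => // ne /hDl [e|//].
  by exfalso; apply: ne.
case: (classic (exists Q0 : HOP A, Utype Q0 /\ sval Q0 = P0)) => [[Q0 [UQ0 eQ0]]|nQ]; last first.
  exists g, h; case: hr => [g0 [h0 [ng [nh H]]]]; do 4 (split=> //).
  move=> P UP; rewrite -H // /D'; case: excluded_middle_informative => // e.
  by exfalso; apply: nQ; exists P.
have [nu [q0 [hq0 [nX0 e0]]]] := UQ0.
have q00 := prime_neq0 hq0.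
have Xq0 := X_ndvd_prime hq0 nX0.
have hDP : forall P : HOP A, Utype P -> D P = D' P + (if excluded_middle_informative (sval P = P0) then D Q0 else 0).
  move=> P UP; rewrite /D'; case: excluded_middle_informative => e.
    by rewrite add0r; congr D; apply: HOP_eq; rewrite e.
  by rewrite addr0.
have hq0P : forall P : HOP A, Utype P ->
  ordA P (thu q0) = if excluded_middle_informative (sval P = P0) then 1%N else 0%N.
  move=> P UP; case: excluded_middle_informative => e.
    by apply: ordA_q0_same => //; rewrite e -e0.
  by apply: ordA_q0_other => // e'; apply: e; rewrite e' -e0.
case: hr => [g0 [h0 [ng [nh H]]]].
case HQ: (D Q0) => [N|N].
  exists (g * q0 ^+ N), h; split; first by rewrite mulf_neq0 ?expf_neq0.
  split=> //; split; first by apply: X_ndvd_mul => //; apply: X_ndvd_exp.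
  split=> // P UP; rewrite hDP // H // rmorphM ordA_mul ?thu_neq0 ?expf_neq0 //.
  rewrite rmorphXn ordA_exp ?thu_neq0 // hq0P //.
  by destruct (excluded_middle_informative (sval P = P0)); rewrite /=; lia.
exists g, (h * q0 ^+ N.+1); split=> //.
split; first by rewrite mulf_neq0 ?expf_neq0.
split=> //; split; first by apply: X_ndvd_mul => //; apply: X_ndvd_exp.
move=> P UP; rewrite hDP // H // rmorphM ordA_mul ?thu_neq0 ?expf_neq0 //.
rewrite rmorphXn ordA_exp ?thu_neq0 // hq0P //.
by destruct (excluded_middle_informative (sval P = P0)); rewrite /= ?NegzE; lia.
Qed.

Definition chosen (D : HOP A -> int) : {poly B} * {poly B} :=
  epsilon (inhabits (1, 1)) (fun gh => Urep D gh.1 gh.2).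

Definition Phi (D : HOP A -> int) (i : 'I_s) : int :=
  D (hD i) - Wv (chosen D).1 (chosen D).2 i.

Lemma Phi_rep D g h : Urep D g h -> forall i, Phi D i = D (hD i) - Wv g h i.
Proof.
move=> hr i; rewrite /Phi.
have hc := epsilon_spec (inhabits (1, 1)) (fun gh => Urep D gh.1 gh.2) (ex_intro _ (g, h) hr).
by rewrite (rep_unique hc hr).
Qed.

Lemma seq_In (T : eqType) (x : T) (l : seq T) : x \in l -> List.In x l.
Proof.
elim: l => [//|y l IH]; rewrite inE => /orP [/eqP ->|/IH h]; [left|right] => //.
Qed.

Lemma u_neq0 : u != 0.
Proof.
apply/negP => /eqP u0; have := uv_f hB f0 hsurj hker; rewrite u0 mul0r.
rewrite -(thC iota u) => /esym /eqP; apply/negP; apply: thu_neq0; by rewrite polyC_eq0.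
Qed.

Lemma is_div_ordA x : x != 0 -> is_div_of x (fun P => (ordA P x)%:Z).
Proof. by move=> x0 P; exists (ordA P x); split=> //; apply: ordA_spec. Qed.

Lemma is_div_eq x Dx : is_div_of x Dx -> forall P, Dx P = (ordA P x)%:Z.
Proof. by move=> h P; have [n [hn ->]] := h P; rewrite (ordA_eq hn). Qed.

Lemma Xdecomp (pp : {poly B}) : pp != 0 -> exists m g, g != 0 /\ ~ rdvd 'X g /\ pp = 'X^m * g.
Proof.
move=> p0; have [m [[g hg] ng]] := exact_exists (poly_factorial hB) (Xprime B) p0.
exists m, g; split; first by apply: contraNneq p0 => e; rewrite hg e mul0r.
split; last by rewrite hg mulrC.
by move=> [c hc]; apply: ng; exists c; rewrite hg hc exprSr; ring.
Qed.

Lemma elem_decomp x : x != 0 -> exists k m g, g != 0 /\ ~ rdvd 'X g /\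
  u ^+ k * x = u ^+ m * thu g.
Proof.
move=> x0; have [k [pp e]] := normal_form hB f0 hsurj hker x.
have p0 : pp != 0.
  apply: contraNneq x0 => e0; apply/eqP; apply: (uk_reg hB f0 hsurj hker (k := k)).
  by rewrite e e0 rmorph0.
have [m [g [g0 [ng eg]]]] := Xdecomp p0.
by exists k, m, g; split=> //; split=> //; rewrite e eg rmorphM thXn.
Qed.

Lemma ordA_decomp (P : HOP A) x k m g : x != 0 -> g != 0 -> u ^+ k * x = u ^+ m * thu g ->
  (ordA P x + k * ordA P u)%N = (m * ordA P u + ordA P (thu g))%N.
Proof.
move=> x0 g0 e.
have := congr1 (ordA P) e.
rewrite !ordA_mul ?A_expf ?u_neq0 ?thu_neq0 // !ordA_exp ?u_neq0 //.
by move=> e2; rewrite addnC.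
Qed.

Lemma Phi_additive D1 D2 : weil_div D1 -> weil_div D2 ->
  forall i, Phi (fun P => D1 P + D2 P) i = Phi D1 i + Phi D2 i.
Proof.
move=> w1 w2 i.
have [g1 [h1 r1]] := rep_exists w1; have [g2 [h2 r2]] := rep_exists w2.
have r12 := rep_add r1 r2.
rewrite (Phi_rep r12) (Phi_rep r1) (Phi_rep r2).
case: r1 => [g10 [h10 _]]; case: r2 => [g20 [h20 _]].
rewrite Wv_mul //; lia.
Qed.

Lemma Phi_surj (z : 'I_s -> int) : exists D, weil_div D /\
  in_span (fun i => (a i)%:Z) (fun i => Phi D i - z i).
Proof.
pose D := fun P : HOP A => \sum_(i < s) (match excluded_middle_informative (sval P = Dv i) with
                                          | left _ => z i | right _ => 0 end).
have D0 : forall P : HOP A, (forall i, sval P <> Dv i) -> D P = 0.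
  move=> P h; rewrite /D big1 // => i _; case: excluded_middle_informative => // e.
  by case: (h i e).
exists D; split.
  exists (map Dv (enum 'I_s)) => P hP.
  case: (classic (exists i, sval P = Dv i)) => [[i ->]|h].
    by apply: List.in_map; apply: seq_In; rewrite mem_enum.
  by exfalso; apply: hP; apply: D0 => i e; apply: h; exists i.
have r : Urep D 1 1.
  have nX1 : ~ rdvd ('X : {poly B}) 1 by apply: prime_ndvd1; apply: Xprime.
  split; first exact: oner_neq0.
  split; first exact: oner_neq0.
  split=> //; split=> // P [nu _].
  rewrite rmorph1 (@ordA_unit P 1 1) ?mulr1 // subrr.
  by apply: D0 => i e; apply: nu; rewrite e; apply: Dv_u.
exists 0 => i; rewrite (Phi_rep r) /Wv subrr subr0 mul0r.
rewrite /D (bigD1 i) //= big1 ?addr0.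
  by case: excluded_middle_informative => [_|ne]; [rewrite subrr|exfalso; apply: ne].
move=> j nji; case: excluded_middle_informative => // e.
by exfalso; move: nji; rewrite (Dv_inj e) eqxx.
Qed.

Lemma Phi_kernel D : weil_div D ->
  (in_span (fun i => (a i)%:Z) (Phi D) <-> principal_div D).
Proof.
move=> wD; have [g [h r]] := rep_exists wD.
have Pr := Phi_rep r.
case: (r) => [g0 [h0 [ng [nh H]]]].
split.
  move=> [K hK].
  have hDi : forall i, D (hD i) = K * (a i)%:Z + Wv g h i.
    by move=> i; rewrite -hK Pr subrK.
  have key : forall x y N M, x = u ^+ N * thu g -> y = u ^+ M * thu h -> K = N%:Z - M%:Z ->
     principal_div D.
    move=> x y N M ex ey eK.
    have x0 : x != 0 by rewrite ex A_domM ?A_expf ?u_neq0 ?thu_neq0.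
    have y0 : y != 0 by rewrite ey A_domM ?A_expf ?u_neq0 ?thu_neq0.
    exists x, y, (fun P => (ordA P x)%:Z), (fun P => (ordA P y)%:Z).
    split=> //; split=> //; split; first exact: is_div_ordA.
    split; first exact: is_div_ordA.
    move=> P; rewrite ex ey !ordA_mul ?A_expf ?u_neq0 ?thu_neq0 // !ordA_exp ?u_neq0 //.
    case: (classify P) => [UP|[i ->]].
      by rewrite H // ordA_u_U //; lia.
    by rewrite hDi ordA_u_D /Wv eK; lia.
  case EK: K => [N|N].
    by apply: (key _ _ N 0%N erefl erefl); rewrite EK subr0.
  by apply: (key _ _ 0%N N.+1 erefl erefl); rewrite EK NegzE sub0r.
move=> [x [y [Dx [Dy [x0 [y0 [hx [hy hDD]]]]]]]].
have [k [m [gx [gx0 [ngx ex]]]]] := elem_decomp x0.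
have [k' [m' [gy [gy0 [ngy ey]]]]] := elem_decomp y0.
have r' : Urep D gx gy.
  split=> //; split=> //; split=> //; split=> // P UP.
  rewrite hDD (is_div_eq hx) (is_div_eq hy).
  have := ordA_decomp P x0 gx0 ex; have := ordA_decomp P y0 gy0 ey.
  by rewrite ordA_u_U //; lia.
exists ((m%:Z - k%:Z) - (m'%:Z - k'%:Z)) => i.
rewrite (Phi_rep r') hDD (is_div_eq hx) (is_div_eq hy) /Wv.
have := ordA_decomp (hD i) x0 gx0 ex; have := ordA_decomp (hD i) y0 gy0 ey.
rewrite ordA_u_D; nia.
Qed.

Lemma main_result : Cl_iso_Zs_mod A (fun i => (a i)%:Z).
Proof.
exists Phi; split; first exact: Phi_additive.
split; first exact: Phi_surj.
exact: Phi_kernel.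
Qed.

End Main.

Unset Implicit Arguments.
Set Strict Implicit.

Theorem corollary4p4
  (K : closedFieldType) (hK : [pchar K] =i pred0)
  (B : idomainType) (phi : {rmorphism K -> B})
  (hfg : fin_gen_alg phi) (hfact : factorial_ring B)
  (f : B) (hf : forall c : K, f <> phi c)
  (s : nat) (p : 'I_s -> B) (a : 'I_s -> nat)
  (hp : forall i, prime_elt (p i))
  (hna : forall i j, i != j -> ~ associated (p i) (p j))
  (ha : forall i, (0 < a i)%N)
  (hfprod : f = \prod_(i < s) p i ^+ a i)
  (A : comNzRingType) (iota : {rmorphism B -> A}) (u v : A)
  (hsurj : forall x : A, exists P, ev2 iota u v P = x)
  (hker : forall P, ev2 iota u v P = 0 <->
            exists Q, P = Q * (('X : {poly B})%:P * 'X - (f%:P)%:P)) :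
  Cl_iso_Zs_mod A (fun i => (a i)%:Z).
Proof.
have f0 : f != 0 by apply/eqP => e; apply: (hf 0); rewrite e rmorph0.
exact: (main_result hfact f0 hp hna ha hfprod hsurj hker).
Qed.
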